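(* Let $\omega$ be a rectilinearly-convex obstacle and let $S^*$ be a minimum skeleton for $\omega$. Then $|S^*|=1$ if and only if $\omega$ has a diagonal.
   Context: An obstacle $\omega$ is a simple polygon in $\mathbb{R}^2$ (a closed, bounded polygonal region without holes whose boundary does not intersect itself), assumed in general position (no three of its vertices are collinear); vertices and edges of $\omega$ are those of its boundary. $\omega$ is rectilinear if each edge is horizontal or vertical, and a rectilinear obstacle is rectilinearly-convex if any two points of $\omega$ can be joined by a shortest rectilinear path (made of horizontal and vertical segments, of minimum $\ell_1$ length) contained in $\omega$. A corner point of a rectilinear path is a point where a horizontal and a vertical segment of the path meet. A set $S$ of closed line segments is inside $\omega$ if the union of its elements is contained in $\omega$. Such an $S$ is a skeleton for $\omega$ if for every pair of points $p,q$ not in the interior of $\omega$ such that every shortest rectilinear path between $p$ and $q$ with at most one corner point meets the interior of $\omega$, each such path intersects some element of $S$; a minimum skeleton is one with the fewest segments, and $|S|$ is the number of segments. $B(\omega)$ is the smallest closed axis-parallel rectangle containing $\omega$; the extreme edges are the edges of $\omega$ lying on the boundary of $B(\omega)$ (exactly four for a rectilinearly-convex obstacle); an extreme corner is a vertex of $\omega$ that is a common endpoint of two extreme edges (equivalently, a corner of $B(\omega)$ belonging to $\omega$). Two extreme corners are opposite if they are diagonally opposite corners of $B(\omega)$. A diagonal of $\omega$ is a line segment contained in $\omega$ joining a pair of opposite extreme corners. *)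

(* Defs.v *)
From HB Require Import structures.
From mathcomp Require Import all_boot all_order all_algebra.
From mathcomp Require Import all_classical all_reals all_analysis.
Set Implicit Arguments. Unset Strict Implicit. Unset Printing Implicit Defensive.
Import Order.TTheory GRing.Theory Num.Theory.
Import numFieldNormedType.Exports.
Local Open Scope classical_set_scope.
Local Open Scope ring_scope.

Section Geom.
Variable R : realType.
Definition pt := (R * R)%type.

Definition seg (a b : pt) : set pt :=
  [set p | exists t : R, 0 <= t <= 1 /\
     p = (a.1 + t * (b.1 - a.1), a.2 + t * (b.2 - a.2))].

Definition vtx (vs : seq pt) (i : nat) : pt := nth (0, 0) vs (i %% size vs).
Definition edge (vs : seq pt) (i : nat) : set pt := seg (vtx vs i) (vtx vs i.+1).
Definition boundary (vs : seq pt) : set pt :=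
  [set p | exists2 i, (i < size vs)%N & edge vs i p].

Definition simple_polygon (vs : seq pt) : Prop :=
  (3 <= size vs)%N /\
  (forall i, (i < size vs)%N -> vtx vs i <> vtx vs i.+1) /\
  (forall i, (i < size vs)%N -> edge vs i `&` edge vs i.+1 = [set vtx vs i.+1]) /\
  (forall i j, (i < size vs)%N -> (j < size vs)%N -> i <> j ->
     j <> (i.+1 %% size vs)%N -> i <> (j.+1 %% size vs)%N ->
     edge vs i `&` edge vs j = set0).

Definition general_position (vs : seq pt) : Prop :=
  forall i j k, (i < size vs)%N -> (j < size vs)%N -> (k < size vs)%N ->
    i <> j -> j <> k -> i <> k ->
    ((vtx vs j).1 - (vtx vs i).1) * ((vtx vs k).2 - (vtx vs i).2)
    - ((vtx vs j).2 - (vtx vs i).2) * ((vtx vs k).1 - (vtx vs i).1) != 0.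

Definition rectilinear_poly (vs : seq pt) : Prop :=
  forall i, (i < size vs)%N ->
    (vtx vs i).1 = (vtx vs i.+1).1 \/ (vtx vs i).2 = (vtx vs i.+1).2.

Definition bounded_set (A : set pt) : Prop :=
  exists M : R, forall q, A q -> `|q.1| <= M /\ `|q.2| <= M.

Definition region (vs : seq pt) : set pt :=
  boundary vs `|`
  [set p | ~ boundary vs p /\
           bounded_set (connected_component (~` boundary vs) p)].

Definition rect_obstacle (vs : seq pt) : Prop :=
  simple_polygon vs /\ general_position vs /\ rectilinear_poly vs.

(* a rectilinear path is given by its start p and its list of further
   corner/vertex points s; consecutive points are distinct and are joined by a
   horizontal or vertical segment *)
Definition rstep (a b : pt) : bool := (a != b) && ((a.1 == b.1) || (a.2 == b.2)).
Definition rpath (p : pt) (s : seq pt) : bool := path rstep p s.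
Definition pend (p : pt) (s : seq pt) : pt := last p s.
(* i-th segment of the path, i < size s *)
Definition pseg (p : pt) (s : seq pt) (i : nat) : set pt :=
  seg (nth p (p :: s) i) (nth p s i).
Definition trace (p : pt) (s : seq pt) : set pt :=
  [set x | x = p \/ exists2 i, (i < size s)%N & pseg p s i x].
Definition l1dist (a b : pt) : R := `|a.1 - b.1| + `|a.2 - b.2|.
Definition plength (p : pt) (s : seq pt) : R := \sum_(d <- pairmap l1dist p s) d.

Definition shortest_rpath (p q : pt) (s : seq pt) : Prop :=
  rpath p s /\ pend p s = q /\
  forall s', rpath p s' -> pend p s' = q -> plength p s <= plength p s'.

Definition pseg_horizontal (p : pt) (s : seq pt) (i : nat) : Prop :=
  (nth p (p :: s) i).2 = (nth p s i).2.
Definition pseg_vertical (p : pt) (s : seq pt) (i : nat) : Prop :=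
  (nth p (p :: s) i).1 = (nth p s i).1.

Definition corner_point (p : pt) (s : seq pt) (x : pt) : Prop :=
  exists i j, [/\ (i < size s)%N, (j < size s)%N,
    pseg_horizontal p s i, pseg_vertical p s j & pseg p s i x /\ pseg p s j x].

Definition at_most_one_corner (p : pt) (s : seq pt) : Prop :=
  forall x y, corner_point p s x -> corner_point p s y -> x = y.

Definition rect_convex (om : set pt) : Prop :=
  forall p q, om p -> om q ->
    exists s, shortest_rpath p q s /\ trace p s `<=` om.

(* a segment is given by its two (distinct) endpoints; S is a finite list of
   segments and |S| = size S *)
Definition inside (om : set pt) (S : seq (pt * pt)) : Prop :=
  forall ab, ab \in S -> ab.1 <> ab.2 /\ seg ab.1 ab.2 `<=` om.

Definition skeleton (om : set pt) (S : seq (pt * pt)) : Prop :=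
  inside om S /\
  forall p q, ~ om^° p -> ~ om^° q ->
    (forall s, shortest_rpath p q s -> at_most_one_corner p s ->
       trace p s `&` om^° !=set0) ->
    forall s, shortest_rpath p q s -> at_most_one_corner p s ->
      exists2 ab, ab \in S & trace p s `&` seg ab.1 ab.2 !=set0.

Definition min_skeleton (om : set pt) (S : seq (pt * pt)) : Prop :=
  skeleton om S /\ forall S', skeleton om S' -> (size S <= size S')%N.

Definition rect (a b c d : R) : set pt :=
  [set p | a <= p.1 <= b /\ c <= p.2 <= d].
Definition is_bbox (om : set pt) (a b c d : R) : Prop :=
  om `<=` rect a b c d /\
  forall a' b' c' d', om `<=` rect a' b' c' d' -> rect a b c d `<=` rect a' b' c' d'.

(* a diagonal: a segment contained in om joining two opposite extreme corners
   (corners of the bounding box that belong to om) *)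
Definition has_diagonal (om : set pt) : Prop :=
  exists a b c d, is_bbox om a b c d /\
   ((om (a, c) /\ om (b, d) /\ seg (a, c) (b, d) `<=` om) \/
    (om (a, d) /\ om (b, c) /\ seg (a, d) (b, c) `<=` om)).
End Geom.

(* Main.v *)
Require Import Defs.
From HB Require Import structures.
From mathcomp Require Import all_boot all_order all_algebra.
From mathcomp Require Import all_classical all_reals all_analysis.
From mathcomp Require Import ring lra.
Set Implicit Arguments. Unset Strict Implicit. Unset Printing Implicit Defensive.
Import Order.TTheory GRing.Theory Num.Theory.
Import numFieldNormedType.Exports.
Local Open Scope classical_set_scope.
Local Open Scope ring_scope.



Section S.
Variable R : realType.
Implicit Types p q : pt R.

Definition btw (u v w : R) := (u <= v <= w) \/ (w <= v <= u).

Lemma btw_param (u v w : R) : btw u v w ->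
  exists t : R, 0 <= t <= 1 /\ v = u + t * (w - u).
Proof.
move=> H; have [uw|uw|uw] := ltgtP u w.
- exists ((v - u) / (w - u)); have wu0 : 0 < w - u by lra.
  case: H => H; last lra.
  rewrite divr_ge0 /=; last 2 first; [lra|lra|].
  rewrite ler_pdivrMr // mul1r divfK; [split; lra|by rewrite gt_eqF].
- exists ((u - v) / (u - w)); have wu0 : 0 < u - w by lra.
  case: H => H; first lra.
  rewrite divr_ge0 /=; last 2 first; [lra|lra|].
  rewrite ler_pdivrMr // mul1r; split; first lra.
  have -> : w - u = - (u - w) by ring.
  rewrite mulrN divfK; [lra|by rewrite gt_eqF].
- exists 0; rewrite lexx ler01; split => //; case: H; rewrite uw => H; lra.
Qed.

Lemma btw_sym u v w : btw u v w -> btw w v u.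
Proof. by rewrite /btw; tauto. Qed.

Lemma seg_hor (a b : pt R) v : a.2 = b.2 -> btw a.1 v b.1 -> seg a b (v, a.2).
Proof.
move=> e /btw_param [t [t01 ->]]; exists t; split => //.
by rewrite e subrr mulr0 addr0.
Qed.

Lemma seg_ver (a b : pt R) v : a.1 = b.1 -> btw a.2 v b.2 -> seg a b (a.1, v).
Proof.
move=> e /btw_param [t [t01 ->]]; exists t; split => //.
by rewrite e subrr mulr0 addr0.
Qed.

Lemma seg_l (a b : pt R) : seg a b a.
Proof. exists 0; rewrite lexx ler01 !mul0r !addr0; by case: a. Qed.

Lemma seg_r (a b : pt R) : seg a b b.
Proof.
exists 1; rewrite lexx ler01 !mul1r; split => //.
by case: a; case: b => ? ? ? ? /=; congr pair; ring.
Qed.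

Lemma seg_sym (a b : pt R) : seg a b = seg b a.
Proof.
suff H : forall a b : pt R, seg a b `<=` seg b a.
  by apply/seteqP; split; apply: H.
move=> {}a {}b w [t [t01 ->]]; exists (1 - t); split; first lra.
congr pair; ring.
Qed.

Lemma seg_coord (a b w : pt R) : seg a b w ->
  btw a.1 w.1 b.1 /\ btw a.2 w.2 b.2.
Proof.
move=> [t [/andP [t0 t1] ->]] /=; rewrite /btw.
have [h|h] := lerP a.1 b.1; have [h'|h'] := lerP a.2 b.2.
- split; left; apply/andP; split; nra.
- split; [left|right]; apply/andP; split; nra.
- split; [right|left]; apply/andP; split; nra.
- split; right; apply/andP; split; nra.
Qed.

Lemma seg_hor_y (a b w : pt R) : a.2 = b.2 -> seg a b w -> w.2 = a.2.
Proof. move=> e /seg_coord [_]; rewrite /btw e; lra. Qed.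

Lemma seg_ver_x (a b w : pt R) : a.1 = b.1 -> seg a b w -> w.1 = a.1.
Proof. move=> e /seg_coord [+ _]; rewrite /btw e; lra. Qed.

Lemma plength_cons p x s : plength p (x :: s) = l1dist p x + plength x s.
Proof. by rewrite /plength /= big_cons. Qed.

Lemma l1_tri (a b c : pt R) : l1dist a c <= l1dist a b + l1dist b c.
Proof.
rewrite /l1dist.
have h1 := ler_distD b.1 a.1 c.1; have h2 := ler_distD b.2 a.2 c.2.
lra.
Qed.

Lemma l1_ge0 (a b : pt R) : 0 <= l1dist a b.
Proof. by rewrite /l1dist addr_ge0. Qed.

Lemma plength_ge p s : l1dist p (pend p s) <= plength p s.
Proof.
elim: s p => [|x s IH] p; first by rewrite /plength /pend /= big_nil /l1dist !subrr normr0 addr0.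
rewrite plength_cons /pend /=; have := IH x; rewrite /pend => h.
have := l1_tri p x (last x s); lra.
Qed.

Lemma abs_btw (u v w : R) : `|u - v| + `|v - w| = `|u - w| -> btw u v w.
Proof.
rewrite /btw => E.
have [h1|h1] := lerP u v; have [h2|h2] := lerP v w.
- by left; apply/andP.
- have e1 : `|u - v| = v - u by rewrite distrC ger0_norm; lra.
  have e2 : `|v - w| = v - w by rewrite gtr0_norm; lra.
  have [h3|h3] := lerP u w.
  + have e3 : `|u - w| = w - u by rewrite distrC ger0_norm; lra.
    exfalso; lra.
  + have e3 : `|u - w| = u - w by rewrite gtr0_norm; lra.
    right; apply/andP; lra.
- have e1 : `|u - v| = u - v by rewrite gtr0_norm; lra.
  have e2 : `|v - w| = w - v by rewrite distrC ger0_norm; lra.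
  have [h3|h3] := lerP u w.
  + have e3 : `|u - w| = w - u by rewrite distrC ger0_norm; lra.
    left; apply/andP; lra.
  + have e3 : `|u - w| = u - w by rewrite gtr0_norm; lra.
    right; apply/andP; lra.
- by right; rewrite !ltW.
Qed.

Definition geo p s := plength p s = l1dist p (pend p s).

Lemma geo_cons p x s : geo p (x :: s) ->
  geo x s /\ btw p.1 x.1 (pend x s).1 /\ btw p.2 x.2 (pend x s).2.
Proof.
rewrite /geo plength_cons /pend /= => e.
have h1 := plength_ge x s; rewrite /pend in h1.
have h2 := l1_tri p x (last x s).
have e1 : plength x s = l1dist x (last x s) by have := l1_ge0 p x; lra.
split => //.
have e2 : l1dist p x + l1dist x (last x s) = l1dist p (last x s) by lra.
move: e2; rewrite /l1dist => e2.
have a1 := ler_distD x.1 p.1 (last x s).1.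
have a2 := ler_distD x.2 p.2 (last x s).2.
split; apply: abs_btw; lra.
Qed.

Lemma nth_shift1 p x s i : (i < size s)%N ->
  nth p (p :: x :: s) i.+1 = nth x (x :: s) i.
Proof. by move=> hi; rewrite /= (set_nth_default x) //= ltnW. Qed.

Lemma nth_shift2 p x s i : (i < size s)%N ->
  nth p (x :: s) i.+1 = nth x s i.
Proof. by move=> hi; rewrite /= (set_nth_default x). Qed.

Lemma pseg_shift p x s i : (i < size s)%N -> pseg p (x :: s) i.+1 = pseg x s i.
Proof. by move=> hi; rewrite /pseg nth_shift1 // nth_shift2. Qed.

Lemma trace_shift p x s : trace x s `<=` trace p (x :: s).
Proof.
move=> w [->|[i hi hw]]; right.
- by exists 0%N => //; rewrite /pseg /=; apply: seg_r.
- by exists i.+1; [rewrite /= ltnS|rewrite pseg_shift].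
Qed.

Lemma trace_seg0 p x s : seg p x `<=` trace p (x :: s).
Proof. by move=> w hw; right; exists 0%N. Qed.

Lemma corner_shift p x s w : corner_point x s w -> corner_point p (x :: s) w.
Proof.
move=> [i [j [hi hj hh hv [wi wj]]]]; exists i.+1, j.+1; split => //.
- by rewrite /pseg_horizontal nth_shift1 // nth_shift2.
- by rewrite /pseg_vertical nth_shift1 // nth_shift2.
- by rewrite !pseg_shift.
Qed.

Lemma amoc_cons p x s : at_most_one_corner p (x :: s) -> at_most_one_corner x s.
Proof. by move=> H u v hu hv; apply: H; apply: corner_shift. Qed.

Lemma rpath_cons p x s : rpath p (x :: s) = rstep p x && rpath x s.
Proof. by []. Qed.

Lemma geo_hor p s : geo p s -> p.2 = (pend p s).2 ->
  (forall w, trace p s w -> w.2 = p.2) /\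
  forall v, btw p.1 v (pend p s).1 -> trace p s (v, p.2).
Proof.
elim: s p => [|x s IH] p.
  move=> _ _; split; first by move=> w [->|[i]].
  rewrite /pend /= /btw => v hv; left; case: p hv => a b /= hv; congr pair; lra.
move=> /geo_cons [g [b1 b2]]; rewrite /pend /= => e.
have ex : x.2 = p.2 by move: b2; rewrite /btw -e; lra.
have e' : x.2 = (last x s).2 by rewrite ex.
have [IH1 IH2] := IH x g e'; rewrite /pend in IH1 IH2.
split.
- move=> w [->//|[[|i] hi hw]].
  + by move: hw; rewrite /pseg /= => /seg_hor_y; apply; rewrite ex.
  + rewrite -ex; apply: IH1; right; exists i => //.
    by rewrite -(pseg_shift p).
- move=> v hv.
  have [h|h] : btw p.1 v x.1 \/ btw x.1 v (last x s).1.
    by move: hv b1; rewrite /btw; lra.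
  + by apply: trace_seg0; apply: seg_hor.
  + by apply: trace_shift; rewrite -ex; apply: IH2.
Qed.

Lemma geo_ver p s : geo p s -> p.1 = (pend p s).1 ->
  (forall w, trace p s w -> w.1 = p.1) /\
  forall v, btw p.2 v (pend p s).2 -> trace p s (p.1, v).
Proof.
elim: s p => [|x s IH] p.
  move=> _ _; split; first by move=> w [->|[i]].
  rewrite /pend /= /btw => v hv; left; case: p hv => a b /= hv; congr pair; lra.
move=> /geo_cons [g [b1 b2]]; rewrite /pend /= => e.
have ex : x.1 = p.1 by move: b1; rewrite /btw -e; lra.
have e' : x.1 = (last x s).1 by rewrite ex.
have [IH1 IH2] := IH x g e'; rewrite /pend in IH1 IH2.
split.
- move=> w [->//|[[|i] hi hw]].
  + by move: hw; rewrite /pseg /= => /seg_ver_x; apply; rewrite ex.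
  + rewrite -ex; apply: IH1; right; exists i => //.
    by rewrite -(pseg_shift p).
- move=> v hv.
  have [h|h] : btw p.2 v x.2 \/ btw x.2 v (last x s).2.
    by move: hv b2; rewrite /btw; lra.
  + by apply: trace_seg0; apply: seg_ver.
  + by apply: trace_shift; rewrite -ex; apply: IH2.
Qed.

Definition Lset1 p q : set (pt R) :=
  [set w | (btw p.1 w.1 q.1 /\ w.2 = p.2) \/ (w.1 = q.1 /\ btw p.2 w.2 q.2)].
Definition Lset2 p q : set (pt R) :=
  [set w | (w.1 = p.1 /\ btw p.2 w.2 q.2) \/ (btw p.1 w.1 q.1 /\ w.2 = q.2)].

Lemma corner_HV p x y s : x.2 = p.2 -> y.1 = x.1 -> corner_point p (x :: y :: s) x.
Proof.
move=> h v; exists 0%N, 1%N; split => //.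
split; [exact: seg_r| exact: seg_l].
Qed.

Lemma corner_VH p x y s : x.1 = p.1 -> y.2 = x.2 -> corner_point p (x :: y :: s) x.
Proof.
move=> h v; exists 1%N, 0%N; split => //.
split; [exact: seg_l| exact: seg_r].
Qed.

Lemma pt_eta (w : pt R) : w = (w.1, w.2).
Proof. by case: w. Qed.

Lemma rstepP (a b : pt R) : rstep a b -> a <> b /\ (a.1 = b.1 \/ a.2 = b.2).
Proof.
by case/andP => /eqP ne /orP [/eqP h|/eqP h]; split => //; [left|right].
Qed.

Lemma geo_L p s : rpath p s -> geo p s -> at_most_one_corner p s ->
  p.1 <> (pend p s).1 -> p.2 <> (pend p s).2 ->
  forall x s', s = x :: s' ->
  (x.2 = p.2 -> Lset1 p (pend p s) `<=` trace p s /\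
                corner_point p s ((pend p s).1, p.2)) /\
  (x.1 = p.1 -> Lset2 p (pend p s) `<=` trace p s /\
                corner_point p s (p.1, (pend p s).2)).
Proof.
elim: s p => [|x s' IH] p //.
move=> rp gp ap n1 n2 x0 s0 [ex0 _]; subst x0.
move: rp; rewrite rpath_cons => /andP [st rp].
have [g [b1 b2]] := geo_cons gp.
move: n1 n2; rewrite /pend /= => n1 n2.
have ap' := amoc_cons ap.
split => hx.
-
  have nx2 : x.2 <> (last x s').2 by rewrite hx.
  case: s' IH rp g ap' b1 b2 n1 n2 nx2 ap gp => [|y s''] IH rp g ap' b1 b2 n1 n2 nx2 ap gp.
    by exfalso; apply: nx2.
  move: (rp); rewrite rpath_cons => /andP [sty rp'].
  have [g' [c1 c2]] := geo_cons g.
  have [xq|xq] := eqVneq x.1 (last y s'').1.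
  + (* x is the corner *)
    have yx : y.1 = x.1 by move: c1; rewrite /btw -xq; lra.
    have [T1 T2] := geo_ver g xq; rewrite /pend /= in T1 T2.
    split; last first.
      by rewrite -xq -hx -pt_eta; apply: corner_HV.
    move=> w [[hw1 hw2]|[hw1 hw2]].
    * apply: trace_seg0; rewrite (pt_eta w) hw2; apply: seg_hor => //.
      by rewrite xq.
    * apply: trace_shift; rewrite (pt_eta w) hw1 -xq; apply: T2; by rewrite hx.
  + have [IHh IHv] := IH x rp g ap' (elimN eqP xq) nx2 y s'' erefl.
    rewrite /pend /= in IHh IHv.
    have [_ [yx|yx]] := rstepP sty.
    * (* vertical second step: two corners *)
      have [_ C2] := IHv (esym yx).
      have C1 := @corner_HV p x y s'' hx (esym yx).
      have C2' := corner_shift p C2.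
      have := ap _ _ C1 C2' => e; exfalso; apply: nx2; by rewrite {1}e.
    * have [L C] := IHh (esym yx).
      split; first last.
        by rewrite -hx; apply: corner_shift.
      move=> w [[hw1 hw2]|[hw1 hw2]].
      - have [h|h] : btw p.1 w.1 x.1 \/ btw x.1 w.1 (last y s'').1.
          by move: hw1 b1; rewrite /btw; lra.
        + apply: trace_seg0; rewrite (pt_eta w) hw2; exact: seg_hor.
        + apply: trace_shift; apply: L; left; split => //; by rewrite hx.
      - apply: trace_shift; apply: L; right; split => //; by rewrite hx.
-
  have nx1 : x.1 <> (last x s').1 by rewrite hx.
  case: s' IH rp g ap' b1 b2 n1 n2 nx1 ap gp => [|y s''] IH rp g ap' b1 b2 n1 n2 nx1 ap gp.
    by exfalso; apply: nx1.
  move: (rp); rewrite rpath_cons => /andP [sty rp'].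
  have [g' [c1 c2]] := geo_cons g.
  have [xq|xq] := eqVneq x.2 (last y s'').2.
  + have yx : y.2 = x.2 by move: c2; rewrite /btw -xq; lra.
    have [T1 T2] := geo_hor g xq; rewrite /pend /= in T1 T2.
    split; last first.
      by rewrite -xq -hx -pt_eta; apply: corner_VH.
    move=> w [[hw1 hw2]|[hw1 hw2]].
    * apply: trace_seg0; rewrite (pt_eta w) hw1; apply: seg_ver => //.
      by rewrite xq.
    * apply: trace_shift; rewrite (pt_eta w) hw2 -xq; apply: T2; by rewrite hx.
  + have [IHh IHv] := IH x rp g ap' nx1 (elimN eqP xq) y s'' erefl.
    rewrite /pend /= in IHh IHv.
    have [_ [yx|yx]] := rstepP sty.
    * have [L C] := IHv (esym yx).
      split; first last.
        by rewrite -hx; apply: corner_shift.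
      move=> w [[hw1 hw2]|[hw1 hw2]].
      - have [h|h] : btw p.2 w.2 x.2 \/ btw x.2 w.2 (last y s'').2.
          by move: hw2 b2; rewrite /btw; lra.
        + apply: trace_seg0; rewrite (pt_eta w) hw1; exact: seg_ver.
        + apply: trace_shift; apply: L; left; split => //; by rewrite hx.
      - apply: trace_shift; apply: L; right; split => //; by rewrite hx.
    * have [_ C2] := IHh (esym yx).
      have C1 := @corner_VH p x y s'' hx (esym yx).
      have C2' := corner_shift p C2.
      have := ap _ _ C1 C2' => e; exfalso; apply: nx1; by rewrite {1}e.
Qed.

Lemma l1_self (a : pt R) : l1dist a a = 0.
Proof. by rewrite /l1dist !subrr normr0 addr0. Qed.

Lemma shortest_of p q s : rpath p s -> pend p s = q -> plength p s = l1dist p q ->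
  shortest_rpath p q s.
Proof.
move=> rp e l; split => //; split => // s' rp' e'.
by rewrite l -e'; apply: plength_ge.
Qed.

Lemma shortest_geo p q s : shortest_rpath p q s -> geo p s.
Proof.
move=> [rp [e sh]]; rewrite /geo e; apply/eqP; rewrite eq_le; apply/andP; split;
  last by rewrite -{1}e; apply: plength_ge.
have [epq|ne] := eqVneq p q.
  rewrite -epq l1_self; have := sh [::] erefl epq.
  by rewrite /plength /= big_nil.
have [e1|n1] := eqVneq p.1 q.1.
  have := sh [:: q]; rewrite /rpath /= /rstep ne e1 eqxx /= => /(_ erefl erefl).
  by rewrite plength_cons /plength big_nil addr0.
have [e2|n2] := eqVneq p.2 q.2.
  have := sh [:: q]; rewrite /rpath /= /rstep ne e2 eqxx orbT /= => /(_ erefl erefl).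
  by rewrite plength_cons /plength big_nil addr0.
have := sh [:: (q.1, p.2); q].
rewrite /rpath /= /rstep /= !eqxx /= orbT.
have -> : (p != (q.1, p.2)) by apply/eqP => h; move: n1; rewrite {1}h /= eqxx.
have -> : ((q.1, p.2) != q) by apply/eqP => h; move: n2; rewrite -h /= eqxx.
move=> /(_ erefl erefl); rewrite !plength_cons /plength big_nil addr0.
by rewrite /l1dist /= !subrr normr0 addr0 add0r.
Qed.

Lemma straight_h p q : p.2 = q.2 -> p <> q ->
  shortest_rpath p q [:: q] /\ at_most_one_corner p [:: q] /\
  trace p [:: q] `<=` [set w | btw p.1 w.1 q.1 /\ w.2 = p.2].
Proof.
move=> e ne; split; [|split].
- apply: shortest_of => //.
    by rewrite /rpath /= /rstep e eqxx orbT !andbT; apply/eqP.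
  by rewrite plength_cons /plength big_nil addr0.
- move=> u v [i [j [hi hj hh hv _]]] _; exfalso.
  move: hi hj hh hv; rewrite /= !ltnS !leqn0 => /eqP -> /eqP ->.
  rewrite /pseg_vertical /= => _ h1; apply: ne; by rewrite (pt_eta p) (pt_eta q) h1 e.
- move=> w [->|[i]]; first by split => //; rewrite /btw lexx /=; lra.
  rewrite /= ltnS leqn0 => /eqP -> /=; rewrite /pseg /= => /seg_coord [h1 h2].
  split => //; move: h2; rewrite /btw e; lra.
Qed.

Lemma straight_v p q : p.1 = q.1 -> p <> q ->
  shortest_rpath p q [:: q] /\ at_most_one_corner p [:: q] /\
  trace p [:: q] `<=` [set w | w.1 = p.1 /\ btw p.2 w.2 q.2].
Proof.
move=> e ne; split; [|split].
- apply: shortest_of => //.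
    by rewrite /rpath /= /rstep e eqxx orTb !andbT; apply/eqP.
  by rewrite plength_cons /plength big_nil addr0.
- move=> u v [i [j [hi hj hh hv _]]] _; exfalso.
  move: hi hj hh hv; rewrite /= !ltnS !leqn0 => /eqP -> /eqP ->.
  rewrite /pseg_horizontal /= => h1 _; apply: ne; by rewrite (pt_eta p) (pt_eta q) h1 e.
- move=> w [->|[i]]; first by split => //; rewrite /btw lexx /=; lra.
  rewrite /= ltnS leqn0 => /eqP -> /=; rewrite /pseg /= => /seg_coord [h1 h2].
  split => //; move: h1; rewrite /btw e; lra.
Qed.

Lemma nil_path p : shortest_rpath p p [::] /\ at_most_one_corner p [::] /\
  trace p [::] `<=` [set p].
Proof.
split; [|split].
- by apply: shortest_of => //; rewrite /plength big_nil l1_self.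
- by move=> u v [i [j [hi]]].
- by move=> w [->|[i]].
Qed.

Lemma path_L1 p q : p.1 <> q.1 -> p.2 <> q.2 ->
  shortest_rpath p q [:: (q.1, p.2); q] /\ at_most_one_corner p [:: (q.1, p.2); q] /\
  trace p [:: (q.1, p.2); q] `<=` Lset1 p q.
Proof.
move=> n1 n2; split; [|split].
- apply: shortest_of => //.
    have h1 : p != (q.1,p.2) by apply/eqP => h; apply: n1; rewrite {1}h.
    have h2 : (q.1,p.2) != q by apply/eqP => h; apply: n2; rewrite -h.
    by rewrite /rpath /= /rstep h1 h2 /= !eqxx !orbT.
  rewrite !plength_cons /plength big_nil addr0.
  by rewrite /l1dist /= !subrr normr0 addr0 add0r.
- suff H : forall w, corner_point p [:: (q.1, p.2); q] w -> w = (q.1, p.2).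
    by move=> u v /H -> /H ->.
  move=> w [i [j [hi hj hh hv [wi wj]]]].
  move: hi hj hh hv wi wj; rewrite /= !ltnS.
  case: i => [|[|//]] _; case: j => [|[|//]] _;
    rewrite /pseg_horizontal /pseg_vertical /pseg /= => hh hv wi wj.
  + by exfalso; apply: n1.
  + rewrite (pt_eta w) (seg_ver_x _ wj) // (seg_hor_y _ wi) //.
  + by exfalso; apply: n2.
  + by exfalso; apply: n2.
- move=> w [->|[i]]; first by left; split => //; rewrite /btw lexx /=; lra.
  rewrite /= ltnS; case: i => [|[|//]] _; rewrite /pseg /= => /seg_coord [h1 h2].
  + left; split => //; move: h2; rewrite /btw; lra.
  + right; split; last by [].
    by move: h1; rewrite /btw; lra.
Qed.

Lemma path_L2 p q : p.1 <> q.1 -> p.2 <> q.2 ->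
  shortest_rpath p q [:: (p.1, q.2); q] /\ at_most_one_corner p [:: (p.1, q.2); q] /\
  trace p [:: (p.1, q.2); q] `<=` Lset2 p q.
Proof.
move=> n1 n2; split; [|split].
- apply: shortest_of => //.
    have h1 : p != (p.1,q.2) by apply/eqP => h; apply: n2; rewrite {1}h.
    have h2 : (p.1,q.2) != q by apply/eqP => h; apply: n1; rewrite -h.
    by rewrite /rpath /= /rstep h1 h2 /= !eqxx !orbT.
  rewrite !plength_cons /plength big_nil addr0.
  by rewrite /l1dist /= !subrr normr0 add0r addr0 addrC.
- suff H : forall w, corner_point p [:: (p.1, q.2); q] w -> w = (p.1, q.2).
    by move=> u v /H -> /H ->.
  move=> w [i [j [hi hj hh hv [wi wj]]]].
  move: hi hj hh hv wi wj; rewrite /= !ltnS.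
  case: i => [|[|//]] _; case: j => [|[|//]] _;
    rewrite /pseg_horizontal /pseg_vertical /pseg /= => hh hv wi wj.
  + by exfalso; apply: n2.
  + by exfalso; apply: n2.
  + rewrite (pt_eta w) (seg_ver_x _ wj) // (seg_hor_y _ wi) //.
  + by exfalso; apply: n1.
- move=> w [->|[i]]; first by left; split => //; rewrite /btw lexx /=; lra.
  rewrite /= ltnS; case: i => [|[|//]] _; rewrite /pseg /= => /seg_coord [h1 h2].
  + left; split; last by move: h2; rewrite /btw; lra.
    by move: h1; rewrite /btw; lra.
  + right; split; last by move: h2; rewrite /btw; lra.
    by [].
Qed.

Lemma trace_straight_h p q s : shortest_rpath p q s -> p.2 = q.2 ->
  forall v, btw p.1 v q.1 -> trace p s (v, p.2).
Proof.
move=> sh e; have g := shortest_geo sh; move: sh => [_ [ep _]].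
by have [_ ] := geo_hor g (etrans e (esym (f_equal snd ep))); rewrite ep.
Qed.

Lemma trace_straight_v p q s : shortest_rpath p q s -> p.1 = q.1 ->
  forall v, btw p.2 v q.2 -> trace p s (p.1, v).
Proof.
move=> sh e; have g := shortest_geo sh; move: sh => [_ [ep _]].
by have [_ ] := geo_ver g (etrans e (esym (f_equal fst ep))); rewrite ep.
Qed.

Lemma trace_L p q s : shortest_rpath p q s -> at_most_one_corner p s ->
  p.1 <> q.1 -> p.2 <> q.2 ->
  Lset1 p q `<=` trace p s \/ Lset2 p q `<=` trace p s.
Proof.
move=> sh am n1 n2; have g := shortest_geo sh; move: sh => [rp [ep _]].
case: s rp g am ep => [|x s'] rp g am ep.
  by exfalso; apply: n1; rewrite -ep.
rewrite -ep in n1 n2 *.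
have [h1 h2] := geo_L rp g am n1 n2 erefl.
move: (rp); rewrite rpath_cons => /andP [st _].
have [_ [e|e]] := rstepP st.
- by right; have [] := h2 (esym e).
- by left; have [] := h1 (esym e).
Qed.
Lemma interiorP (A : set (pt R)) p : A^° p <->
  exists2 e : R, 0 < e & forall q, `|q.1 - p.1| < e -> `|q.2 - p.2| < e -> A q.
Proof.
split.
- rewrite /interior => /nbhs_ballP [e e0 H]; exists e => // q h1 h2.
  apply: H; split => /=; rewrite /ball /= distrC //.
- move=> [e e0 H]; rewrite /interior; apply/nbhs_ballP; exists e => //= q [h1 h2].
  move: h1 h2; rewrite /ball /= => h1 h2.
  by apply: H; rewrite distrC.
Qed.

Lemma hline_connected (J : set R) y : is_interval J ->
  connected [set z : pt R | J z.1 /\ z.2 = y].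
Proof.
move=> iJ.
have -> : [set z : pt R | J z.1 /\ z.2 = y] = (fun t => (t, y)) @` J.
  apply/seteqP; split => [[a b] /= [Ja ->]|z [t Jt <-]] //; by exists a.
apply: connected_continuous_connected; first exact/connected_intervalP.
apply: continuous_subspaceT => t.
exact: (@cvg_pair _ _ _ _ _ _ _ _ _ (fun t => t) (fun _ => y) cvg_id (cvg_cst y)).
Qed.

Lemma vline_connected (J : set R) x : is_interval J ->
  connected [set z : pt R | z.1 = x /\ J z.2].
Proof.
move=> iJ.
have -> : [set z : pt R | z.1 = x /\ J z.2] = (fun t => (x, t)) @` J.
  apply/seteqP; split => [[a b] /= [-> Ja]|z [t Jt <-]] //; by exists b.
apply: connected_continuous_connected; first exact/connected_intervalP.
apply: continuous_subspaceT => t.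
exact: (@cvg_pair _ _ _ _ _ _ _ _ _ (fun _ => x) (fun t => t) (cvg_cst x) cvg_id).
Qed.
End S.



Section N.
Variable R : realType.
Implicit Types p q r : pt R.

Definition nearp (P : pt R -> Prop) r :=
  exists2 e : R, 0 < e & forall r', `|r'.1 - r.1| < e -> `|r'.2 - r.2| < e -> P r'.

Lemma nearp_and (P Q : pt R -> Prop) r : nearp P r -> nearp Q r ->
  nearp (fun r' => P r' /\ Q r') r.
Proof.
move=> [e1 e10 H1] [e2 e20 H2]; exists (Num.min e1 e2); first by rewrite lt_min e10.
move=> r' h1 h2; move: h1 h2; rewrite !lt_min => /andP [a1 a2] /andP [b1 b2].
by split; [apply: H1|apply: H2].
Qed.

Lemma nearp_mono (P Q : pt R -> Prop) r : (forall r', P r' -> Q r') ->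
  nearp P r -> nearp Q r.
Proof. by move=> PQ [e e0 H]; exists e => // r' h1 h2; apply/PQ/H. Qed.

Lemma nearp_all (n : nat) (P : nat -> pt R -> Prop) r :
  (forall i, (i < n)%N -> nearp (P i) r) ->
  nearp (fun r' => forall i, (i < n)%N -> P i r') r.
Proof.
elim: n => [|n IH] H; first by exists 1 => // r' _ _ i.
have := nearp_and (IH (fun i hi => H i (ltnW hi))) (H n (ltnSn n)).
apply: nearp_mono => r' [h1 h2] i; rewrite ltnS leq_eqVlt => /orP [/eqP ->//|].
exact: h1.
Qed.

Lemma nearp_true r : nearp (fun _ => True) r.
Proof. by exists 1. Qed.

Lemma nearp_x_lt (a : R) r : a <> r.1 -> nearp (fun r' => (r'.1 < a) = (r.1 < a)) r.
Proof.
move=> ne; exists `|a - r.1|; first by rewrite normr_gt0 subr_eq0; apply/eqP.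
move=> r' h _; have [h1|h1] := ltP r.1 a.
- move: h; rewrite (gtr0_norm (x := a - r.1)) ?subr_gt0 // ltr_norml => h.
  apply/idP; lra.
- have h1' : a < r.1 by rewrite lt_neqAle h1 andbT; apply/eqP.
  move: h; rewrite (ltr0_norm (x := a - r.1)) ?subr_lt0 // ltr_norml => h.
  apply/negbTE; rewrite -leNgt; lra.
Qed.

Lemma nearp_y_le (y0 : R) r :
  nearp (fun r' => (y0 <= r'.2) = (y0 <= r.2) (+) ((r'.2 < r.2) && (y0 == r.2))) r.
Proof.
have [e|ne] := eqVneq y0 r.2.
  by exists 1 => // r' _ _ /=; rewrite e lexx andbT leNgt.
exists `|y0 - r.2|; first by rewrite normr_gt0 subr_eq0.
move=> r' _ h; rewrite andbF addbF.
have [h1|h1] := ltP y0 r.2.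
- move: h; rewrite (ltr0_norm (x := y0 - r.2)) ?subr_lt0 // ltr_norml => h.
  rewrite (ltW h1); apply/idP; lra.
- have h1' : r.2 < y0 by rewrite lt_neqAle h1 andbT eq_sym.
  move: h; rewrite (gtr0_norm (x := y0 - r.2)) ?subr_gt0 // ltr_norml => h.
  rewrite [y0 <= r.2]leNgt h1' /=; apply/negbTE; rewrite -ltNge; lra.
Qed.

Lemma nearp_interior (A : set (pt R)) r : nearp A r -> A^° r.
Proof. by move=> [e e0 H]; apply/interiorP; exists e. Qed.

Variable vs : seq (pt R).
Hypothesis Hvs : rect_obstacle vs.

Local Notation n := (size vs).
Local Notation v := (vtx vs).

Lemma n_gt0 : (0 < n)%N.
Proof. by case: Hvs => [[h _] _]; apply: (@leq_trans 3). Qed.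

Lemma vtx_mod i : v (i %% n)%N = v i.
Proof. by rewrite /vtx modn_mod. Qed.

Lemma vtx_n : v n = v 0.
Proof. by rewrite /vtx modnn mod0n. Qed.

Lemma vtx_S i : v (i %% n)%N.+1 = v i.+1.
Proof. by rewrite /vtx -[((i %% n)%N).+1]addn1 modnDml addn1. Qed.

Lemma edge_mod i : edge vs (i %% n)%N = edge vs i.
Proof. by rewrite /edge vtx_mod vtx_S. Qed.

Lemma vtx_neq i : v i <> v i.+1.
Proof.
case: Hvs => [[_ [h _]] _].
by have := h (i %% n)%N; rewrite ltn_mod n_gt0 vtx_mod vtx_S; apply.
Qed.

Lemma vtx_rect i : (v i).1 = (v i.+1).1 \/ (v i).2 = (v i.+1).2.
Proof.
case: Hvs => [_ [_ h]].
by have := h (i %% n)%N; rewrite ltn_mod n_gt0 vtx_mod vtx_S; apply.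
Qed.

Definition vert i := (v i).1 == (v i.+1).1.

Lemma not_vert i : ~~ vert i -> (v i).2 = (v i.+1).2.
Proof. by move=> /eqP nv; case: (@vtx_rect i). Qed.

Lemma vert_y i : vert i -> (v i).2 <> (v i.+1).2.
Proof.
move=> /eqP h e; have := @vtx_neq i; apply.
by rewrite (pt_eta (v i)) h e -pt_eta.
Qed.

Lemma edgeP i w : edge vs i w <->
  btw (v i).1 w.1 (v i.+1).1 /\ btw (v i).2 w.2 (v i.+1).2.
Proof.
split; first exact: seg_coord.
move=> [h1 h2]; rewrite /edge.
case: (@vtx_rect i) => e.
- have : w.1 = (v i).1 by move: h1; rewrite /btw e; lra.
  by move=> e'; rewrite (pt_eta w) e'; apply: seg_ver.
- have : w.2 = (v i).2 by move: h2; rewrite /btw e; lra.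
  by move=> e'; rewrite (pt_eta w) e'; apply: seg_hor.
Qed.

Definition xsum (F : nat -> bool) := \big[addb/false]_(0 <= i < n) F i.

Lemma xsum_shift (F : nat -> bool) : F n = F 0%N ->
  xsum (fun i => F i.+1) = xsum F.
Proof.
move=> e; rewrite /xsum; have n0 := n_gt0.
by rewrite -(prednK n0) big_nat_recr //= big_nat_recl //= prednK // e addbC.
Qed.

Lemma xsum_split (F G : nat -> bool) : xsum (fun i => F i (+) G i) = xsum F (+) xsum G.
Proof. by rewrite /xsum big_split. Qed.

Lemma xsum_even (f : pt R -> bool) : xsum (fun i => f (v i) (+) f (v i.+1)) = false.
Proof.
rewrite xsum_split (xsum_shift (F := fun i => f (v i))) ?addbb //.
by rewrite vtx_n.
Qed.

Lemma xsum_eq (F G : nat -> bool) : (forall i, (i < n)%N -> F i = G i) -> xsum F = xsum G.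
Proof. by move=> h; apply: eq_big_nat => i /andP [_ /h]. Qed.

Lemma xsum_andl b (F : nat -> bool) : xsum (fun i => b && F i) = b && xsum F.
Proof.
case: b; first by [].
by rewrite /xsum big1.
Qed.

Lemma xsum_one (i0 : nat) : (i0 < n)%N -> xsum (fun i => i == i0) = true.
Proof.
move=> hi; rewrite /xsum (bigD1_seq i0) /=.
- by rewrite eqxx big1 // => i /negbTE.
- by rewrite mem_index_iota hi.
- exact: iota_uniq.
Qed.

Lemma near_x_lt (a : R) r : r.1 < a -> nearp (fun r' => r'.1 < a) r.
Proof.
move=> h; exists (a - r.1); first by rewrite subr_gt0.
by move=> r' h1 _; move: h1; rewrite ltr_norml; lra.
Qed.

Lemma near_x_gt (a : R) r : a < r.1 -> nearp (fun r' => a < r'.1) r.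
Proof.
move=> h; exists (r.1 - a); first by rewrite subr_gt0.
by move=> r' h1 _; move: h1; rewrite ltr_norml; lra.
Qed.

Lemma near_y_lt (a : R) r : r.2 < a -> nearp (fun r' => r'.2 < a) r.
Proof.
move=> h; exists (a - r.2); first by rewrite subr_gt0.
by move=> r' _ h1; move: h1; rewrite ltr_norml; lra.
Qed.

Lemma near_y_gt (a : R) r : a < r.2 -> nearp (fun r' => a < r'.2) r.
Proof.
move=> h; exists (r.2 - a); first by rewrite subr_gt0.
by move=> r' _ h1; move: h1; rewrite ltr_norml; lra.
Qed.

Lemma nbtw_cases (u a w : R) : ~ btw u a w -> (a < u /\ a < w) \/ (u < a /\ w < a).
Proof.
rewrite /btw => h.
have [h1|h1] := ltP a u; have [h2|h2] := ltP a w.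
- by left.
- by exfalso; apply: h; right; apply/andP; lra.
- by exfalso; apply: h; left; apply/andP; lra.
- have [e|ne] := eqVneq a u.
    by exfalso; apply: h; right; apply/andP; rewrite e; lra.
  have [e|ne'] := eqVneq a w.
    by exfalso; apply: h; left; apply/andP; rewrite e; lra.
  right; split; rewrite lt_neqAle; apply/andP; split => //; by rewrite eq_sym.
Qed.

Lemma near_nbtw1 (u w : R) r : ~ btw u r.1 w -> nearp (fun r' => ~ btw u r'.1 w) r.
Proof.
move=> /nbtw_cases [[h1 h2]|[h1 h2]].
- apply: nearp_mono (nearp_and (near_x_lt h1) (near_x_lt h2)) => r' [a b].
  rewrite /btw; lra.
- apply: nearp_mono (nearp_and (near_x_gt h1) (near_x_gt h2)) => r' [a b].
  rewrite /btw; lra.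
Qed.

Lemma near_nbtw2 (u w : R) r : ~ btw u r.2 w -> nearp (fun r' => ~ btw u r'.2 w) r.
Proof.
move=> /nbtw_cases [[h1 h2]|[h1 h2]].
- apply: nearp_mono (nearp_and (near_y_lt h1) (near_y_lt h2)) => r' [a b].
  rewrite /btw; lra.
- apply: nearp_mono (nearp_and (near_y_gt h1) (near_y_gt h2)) => r' [a b].
  rewrite /btw; lra.
Qed.

Lemma near_not_edge i r : ~ edge vs i r -> nearp (fun r' => ~ edge vs i r') r.
Proof.
move=> h.
have : ~ btw (v i).1 r.1 (v i.+1).1 \/ ~ btw (v i).2 r.2 (v i.+1).2.
  apply: contrapT => /not_orP [/contrapT a /contrapT b]; apply: h; exact/edgeP.
case => [/near_nbtw1|/near_nbtw2]; apply: nearp_mono => r' H /edgeP [a b]; exact: H.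
Qed.

Lemma near_not_bd r : ~ boundary vs r -> nearp (fun r' => ~ boundary vs r') r.
Proof.
move=> h.
have H : forall i, (i < n)%N -> nearp (fun r' => ~ edge vs i r') r.
  by move=> i hi; apply: near_not_edge => e; apply: h; exists i.
apply: nearp_mono (nearp_all H) => r' H' [i hi e]; exact: (H' i hi).
Qed.

Definition cr i r := vert i && (r.1 < (v i).1) &&
  (((v i).2 <= r.2) (+) ((v i.+1).2 <= r.2)).
Definition par r := xsum (fun i => cr i r).
Definition Jr i r := vert i && (r.1 < (v i).1) &&
  (((v i).2 == r.2) (+) ((v i.+1).2 == r.2)).

Lemma near_cr i r : nearp (fun r' => (r'.1 < (v i).1) = (r.1 < (v i).1) ->
  cr i r' = cr i r (+) ((r'.2 < r.2) && Jr i r)) r.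
Proof.
apply: nearp_mono (nearp_and (@nearp_y_le (v i).2 r) (@nearp_y_le (v i.+1).2 r)).
move=> r' [e1 e2] hx; rewrite /cr /Jr hx e1 e2.
case: (vert i); case: (r.1 < _); case: (r'.2 < r.2);
  case: ((v i).2 <= r.2); case: ((v i.+1).2 <= r.2);
  case: ((v i).2 == r.2); case: ((v i.+1).2 == r.2); by [].
Qed.

Lemma Jr_even r : (forall i, (i < n)%N -> ~~ vert i -> ~ edge vs i r) ->
  xsum (fun i => Jr i r) = false.
Proof.
move=> H.
pose g (w : pt R) := (w.2 == r.2) && (r.1 < w.1).
rewrite -(xsum_even g); apply: xsum_eq => i hi; rewrite /Jr /g.
case vi: (vert i) => /=.
- move/eqP: vi => ->.
  by case: (r.1 < _); case: (_ == r.2); case: (_ == r.2).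
- have ey := not_vert (negbT vi); rewrite -ey.
  case: eqP => //= ey2.
  have := H i hi (negbT vi).
  case: (ltP r.1 (v i).1) => h1; case: (ltP r.1 (v i.+1).1) => h2 //= hne.
  + exfalso; apply: hne; apply/edgeP; split; rewrite /btw; [lra|rewrite -ey ey2; lra].
  + exfalso; apply: hne; apply/edgeP; split; rewrite /btw; [lra|rewrite -ey ey2; lra].
Qed.

Lemma near_par r : ~ boundary vs r -> nearp (fun r' => par r' = par r) r.
Proof.
move=> hb.
have hb' : forall i, (i < n)%N -> ~ edge vs i r by move=> i hi e; apply: hb; exists i.
have H : forall i, (i < n)%N ->
  nearp (fun r' => cr i r' = cr i r (+) ((r'.2 < r.2) && Jr i r)) r.
  move=> i hi; have [ex|nx] := eqVneq (v i).1 r.1.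
  - have -> : Jr i r = false by rewrite /Jr ex ltxx andbF.
    have -> : cr i r = false by rewrite /cr ex ltxx andbF.
    case vi: (vert i).
    + have nb : ~ btw (v i).2 r.2 (v i.+1).2.
        move=> b; apply: (hb' i hi); apply/edgeP; split => //.
        move/eqP: vi => <-; rewrite /btw ex; lra.
      have ny1 : (v i).2 != r.2 by apply/eqP => e; apply: nb; rewrite /btw e; lra.
      have ny2 : (v i.+1).2 != r.2 by apply/eqP => e; apply: nb; rewrite /btw e; lra.
      apply: nearp_mono (nearp_and (@nearp_y_le (v i).2 r) (@nearp_y_le (v i.+1).2 r)).
      move=> r' [e1 e2]; rewrite /cr vi e1 e2 (negbTE ny1) (negbTE ny2) !andbF !addbF.
      have [[a b]|[a b]] := nbtw_cases nb.
      * by rewrite !(leNgt _ r.2) a b /= andbF.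
      * by rewrite (ltW a) (ltW b) /= andbF.
    + by exists 1 => // r' _ _; rewrite /cr vi /= ?andbF ?addbF.
  - apply: nearp_mono (nearp_and (@near_cr i r) (@nearp_x_lt (v i).1 r (elimN eqP nx))) => r' [h1 h2].
    exact: h1.
apply: nearp_mono (nearp_all H) => r' H'.
rewrite /par (xsum_eq H') xsum_split xsum_andl Jr_even ?andbF ?addbF //.
by move=> i hi _; apply: hb'.
Qed.

Lemma xsum_false : xsum (fun _ => false) = false.
Proof. by rewrite /xsum big1. Qed.

Lemma par_bounds r : par r ->
  [/\ exists2 i, (i < n)%N & (v i).1 <= r.1, exists2 i, (i < n)%N & r.1 < (v i).1,
      exists2 i, (i < n)%N & (v i).2 <= r.2 & exists2 i, (i < n)%N & r.2 < (v i).2].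
Proof.
move=> hp; split; apply: contrapT => /forall2NP H; move: hp; apply/negP; apply/negbT.
- have H' : forall i, (i < n)%N -> r.1 < (v i).1.
    by move=> i hi; case: (H i) => // /negP; rewrite -ltNge.
  rewrite /par (xsum_eq (G := fun i => ((v i).2 <= r.2) (+) ((v i.+1).2 <= r.2))).
    by rewrite (xsum_even (fun w => w.2 <= r.2)).
  move=> i hi; rewrite /cr H' // andbT.
  by case vi: (vert i) => //=; rewrite (not_vert (negbT vi)) addbb.
- have H' : forall i, (i < n)%N -> (r.1 < (v i).1) = false.
    by move=> i hi; case: (H i) => // /negP /negbTE.
  by rewrite /par (xsum_eq (G := fun _ => false)) ?xsum_false // => i hi; rewrite /cr H' // andbF.
- have H' : forall i, (i < n)%N -> ((v i).2 <= r.2) = false.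
    by move=> i hi; case: (H i) => // /negP /negbTE.
  rewrite /par (xsum_eq (G := fun _ => false)) ?xsum_false // => i hi.
  have hi' : ((i.+1 %% n)%N < n)%N by rewrite ltn_mod n_gt0.
  by rewrite /cr H' // -(vtx_mod i.+1) H' // andbF.
- have H' : forall i, (i < n)%N -> ((v i).2 <= r.2) = true.
    by move=> i hi; case: (H i) => // /negP; rewrite -leNgt.
  rewrite /par (xsum_eq (G := fun _ => false)) ?xsum_false // => i hi.
  have hi' : ((i.+1 %% n)%N < n)%N by rewrite ltn_mod n_gt0.
  by rewrite /cr H' // -(vtx_mod i.+1) H' // andbF.
Qed.

Definition Msum := \sum_(0 <= i < n) (`|(v i).1| + `|(v i).2|).

Lemma vtx_le_M i : (i < n)%N -> `|(v i).1| <= Msum /\ `|(v i).2| <= Msum.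
Proof.
move=> hi; rewrite /Msum (bigD1_seq i) /= ?mem_index_iota ?iota_uniq //.
have h : 0 <= \sum_(j <- index_iota 0 n | j != i) (`|(v j).1| + `|(v j).2|).
  by apply: sumr_ge0 => j _; rewrite addr_ge0.
have := normr_ge0 (v i).1; have := normr_ge0 (v i).2; lra.
Qed.

Lemma all_vtx (P : pt R -> Prop) : (forall i, (i < n)%N -> P (v i)) -> forall i, P (v i).
Proof. by move=> H i; rewrite -vtx_mod; apply: H; rewrite ltn_mod n_gt0. Qed.

Lemma abs_le_M (a b c : R) : a <= b <= c -> `|a| <= Msum -> `|c| <= Msum -> `|b| <= Msum.
Proof.
move=> /andP [h1 h2]; rewrite !ler_norml => /andP [a1 a2] /andP [c1 c2].
apply/andP; lra.
Qed.

Lemma par_bounded r : par r -> `|r.1| <= Msum /\ `|r.2| <= Msum.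
Proof.
case/par_bounds => [[i hi h1] [j hj h2] [k hk h3] [l hl h4]]; split.
- apply: (@abs_le_M (v i).1 r.1 (v j).1); first by apply/andP; split => //; exact: ltW.
  + by case: (vtx_le_M hi).
  + by case: (vtx_le_M hj).
- apply: (@abs_le_M (v k).2 r.2 (v l).2); first by apply/andP; split => //; exact: ltW.
  + by case: (vtx_le_M hk).
  + by case: (vtx_le_M hl).
Qed.

Lemma par_conn (A : set (pt R)) a b : connected A -> A `<=` ~` boundary vs ->
  A a -> A b -> par a = par b.
Proof.
move=> cA AU Aa Ab.
pose P := [set r | ~ boundary vs r /\ par r = par a].
pose Q := [set r | ~ boundary vs r /\ par r != par a].
have nP : forall r, ~ boundary vs r -> par r = par a -> P^° r.
  move=> r hr e; apply: nearp_interior.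
  apply: nearp_mono (nearp_and (near_not_bd hr) (near_par hr)) => r' [h1 h2].
  by split => //; rewrite h2.
have nQ : forall r, ~ boundary vs r -> par r != par a -> Q^° r.
  move=> r hr e; apply: nearp_interior.
  apply: nearp_mono (nearp_and (near_not_bd hr) (near_par hr)) => r' [h1 h2].
  by split => //; rewrite h2.
have E : A `&` P^° = A.
  apply: cA.
  - by exists a; split => //; apply: nP => //; apply: AU.
  - by exists P^° => //; exact: open_interior.
  - exists (~` Q^°); first exact/open_closedC/open_interior.
    apply/seteqP; split => r [Ar Hr]; split => //.
    + move=> /interior_subset [_]; move: Hr => /interior_subset [_ ->]; by rewrite eqxx.
    + have hr := AU r Ar.
      have [e|ne] := eqVneq (par r) (par a); first exact: nP.
      by exfalso; apply: Hr; apply: nQ.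
have : (A `&` P^°) b by rewrite E.
by move=> [_ /interior_subset [_ ->]].
Qed.

Lemma odd_interior r : ~ boundary vs r -> par r -> (region vs)^° r.
Proof.
move=> hr pr; apply: nearp_interior.
apply: nearp_mono (nearp_and (near_not_bd hr) (near_par hr)) => r' [h1 h2].
right; split => //; exists Msum => q hq.
apply: par_bounded.
rewrite -(@par_conn (connected_component (~` boundary vs) r') r' q) ?h2 //.
- exact: component_connected.
- exact: connected_component_sub.
- exact: connected_component_refl.
Qed.

Lemma unbounded_not_region (A : set (pt R)) r : connected A -> A `<=` ~` boundary vs ->
  A r -> (forall M, exists2 z, A z & M < `|z.1|) -> ~ region vs r.
Proof.
move=> cA AU Ar H [hb|[hb [M HM]]]; first exact: (AU r Ar).
have [z Az hz] := H M.
have := HM z (connected_component_max Ar AU cA Az); lra.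
Qed.

Lemma unbounded_not_region2 (A : set (pt R)) r : connected A -> A `<=` ~` boundary vs ->
  A r -> (forall M, exists2 z, A z & M < `|z.2|) -> ~ region vs r.
Proof.
move=> cA AU Ar H [hb|[hb [M HM]]]; first exact: (AU r Ar).
have [z Az hz] := H M.
have := HM z (connected_component_max Ar AU cA Az); lra.
Qed.

Lemma is_interval_le (c : R) : is_interval [set t : R | t <= c].
Proof. by move=> x y /= hx hy z /andP [h1 h2]; apply: le_trans hy. Qed.

Lemma is_interval_ge (c : R) : is_interval [set t : R | c <= t].
Proof. by move=> x y /= hx hy z /andP [h1 h2]; apply: le_trans h1. Qed.

Lemma edge_x_btw i w : edge vs i w -> btw (v i).1 w.1 (v i.+1).1.
Proof. by case/edgeP. Qed.
Lemma edge_y_btw i w : edge vs i w -> btw (v i).2 w.2 (v i.+1).2.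
Proof. by case/edgeP. Qed.

Lemma ray_left r : (forall i, (i < n)%N -> r.1 < (v i).1) -> ~ region vs r.
Proof.
move=> H; have H' := @all_vtx (fun w : pt R => r.1 < w.1) H.
apply: (@unbounded_not_region [set z | [set t | t <= r.1] z.1 /\ z.2 = r.2]).
- exact/hline_connected/is_interval_le.
- move=> z [/= hz _] [i _ /edge_x_btw]; have := H' i; have := H' i.+1.
  rewrite /btw; lra.
- by split => //=.
- move=> M; exists (Num.min r.1 (- `|M| - 1), r.2); first by split => //=; rewrite ge_min lexx.
  rewrite /=; have : Num.min r.1 (- `|M| - 1) <= - `|M| - 1 by rewrite ge_min lexx orbT.
  move=> h; have h1 := ler_norm M; have h2 := normr_ge0 M; rewrite ltr0_norm; lra.
Qed.

Lemma ray_right r : (forall i, (i < n)%N -> (v i).1 < r.1) -> ~ region vs r.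
Proof.
move=> H; have H' := @all_vtx (fun w : pt R => w.1 < r.1) H.
apply: (@unbounded_not_region [set z | [set t | r.1 <= t] z.1 /\ z.2 = r.2]).
- exact/hline_connected/is_interval_ge.
- move=> z [/= hz _] [i _ /edge_x_btw]; have := H' i; have := H' i.+1.
  rewrite /btw; lra.
- by split => //=.
- move=> M; exists (Num.max r.1 (`|M| + 1), r.2); first by split => //=; rewrite le_max lexx.
  rewrite /=; have : `|M| + 1 <= Num.max r.1 (`|M| + 1) by rewrite le_max lexx orbT.
  move=> h; have h1 := ler_norm M; have h2 := normr_ge0 M; rewrite gtr0_norm; lra.
Qed.

Lemma ray_down r : (forall i, (i < n)%N -> r.2 < (v i).2) -> ~ region vs r.
Proof.
move=> H; have H' := @all_vtx (fun w : pt R => r.2 < w.2) H.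
apply: (@unbounded_not_region2 [set z | z.1 = r.1 /\ [set t | t <= r.2] z.2]).
- exact/vline_connected/is_interval_le.
- move=> z [_ /= hz] [i _ /edge_y_btw]; have := H' i; have := H' i.+1.
  rewrite /btw; lra.
- by split => //=.
- move=> M; exists (r.1, Num.min r.2 (- `|M| - 1)); first by split => //=; rewrite ge_min lexx.
  rewrite /=; have : Num.min r.2 (- `|M| - 1) <= - `|M| - 1 by rewrite ge_min lexx orbT.
  move=> h; have h1 := ler_norm M; have h2 := normr_ge0 M; rewrite ltr0_norm; lra.
Qed.

Lemma ray_up r : (forall i, (i < n)%N -> (v i).2 < r.2) -> ~ region vs r.
Proof.
move=> H; have H' := @all_vtx (fun w : pt R => w.2 < r.2) H.
apply: (@unbounded_not_region2 [set z | z.1 = r.1 /\ [set t | r.2 <= t] z.2]).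
- exact/vline_connected/is_interval_ge.
- move=> z [_ /= hz] [i _ /edge_y_btw]; have := H' i; have := H' i.+1.
  rewrite /btw; lra.
- by split => //=.
- move=> M; exists (r.1, Num.max r.2 (`|M| + 1)); first by split => //=; rewrite le_max lexx.
  rewrite /=; have : `|M| + 1 <= Num.max r.2 (`|M| + 1) by rewrite le_max lexx orbT.
  move=> h; have h1 := ler_norm M; have h2 := normr_ge0 M; rewrite gtr0_norm; lra.
Qed.

Lemma only_edge i0 j w : (i0 < n)%N -> (j < n)%N -> j <> i0 -> edge vs i0 w ->
  w <> v i0 -> w <> v i0.+1 -> ~ edge vs j w.
Proof.
case: Hvs => [[_ [_ [H3 H4]]] _] hi hj ne e0 n0 n1 ej.
have [e1|n2] := eqVneq j (i0.+1 %% n)%N.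
  have : (edge vs i0 `&` edge vs i0.+1) w by split => //; rewrite -edge_mod -e1.
  by rewrite H3.
have [e2|n3] := eqVneq i0 (j.+1 %% n)%N.
  have : (edge vs j `&` edge vs j.+1) w by split => //; rewrite -edge_mod -e2.
  by rewrite H3 // => /= e; apply: n0; rewrite e e2 vtx_mod.
have : (edge vs i0 `&` edge vs j) w by [].
rewrite H4 //; first by move=> e; apply: ne.
- exact/eqP.
- exact/eqP.
Qed.

Lemma btw_dist (a t b d : R) : btw a t b -> `|b - a| < d -> `|t - a| < d.
Proof. rewrite /btw !ltr_norml => h /andP [h1 h2]; apply/andP; lra. Qed.

Lemma is_interval_btw (a b : R) : is_interval [set t : R | btw a t b].
Proof. move=> x y /= hx hy z /andP [h1 h2]; move: hx hy; rewrite /btw; lra. Qed.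

Lemma nb_region_interior w : region vs w -> ~ boundary vs w -> (region vs)^° w.
Proof.
move=> [hb|[_ bnd]] nb; first by [].
have [d d0 Hd] := near_not_bd nb.
apply/interiorP; exists d => // r' h1 h2.
pose U := ~` boundary vs.
pose m := (r'.1, w.2).
pose A1 := [set z : pt R | [set t | btw w.1 t r'.1] z.1 /\ z.2 = w.2].
pose A2 := [set z : pt R | z.1 = r'.1 /\ [set t | btw w.2 t r'.2] z.2].
have A1U : A1 `<=` U.
  move=> z [hz1 hz2]; apply: Hd; first exact: btw_dist hz1 h1.
  by rewrite hz2 subrr normr0.
have A2U : A2 `<=` U.
  move=> z [hz1 hz2]; apply: Hd; first by rewrite hz1.
  exact: btw_dist hz2 h2.
have c1 : connected_component U w m.
  apply: (connected_component_max (B := A1)) => //.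
  - by split => //=; rewrite /btw lexx /=; lra.
  - exact/hline_connected/is_interval_btw.
  - by split => //=; rewrite /btw lexx /=; lra.
have c2 : connected_component U m r'.
  apply: (connected_component_max (B := A2)) => //.
  - by split => //=; rewrite /btw lexx /=; lra.
  - exact/vline_connected/is_interval_btw.
  - by split => //=; rewrite /btw lexx /=; lra.
have c3 : connected_component U w r' := connected_component_trans c1 c2.
right; split; first exact: (connected_component_sub c3).
by rewrite -(same_connected_component c3).
Qed.

Lemma xor_strict (a y b : R) : btw a y b -> a != y -> b != y -> (a <= y) (+) (b <= y).
Proof.
case => /andP [h1 h2] na nb.
- rewrite h1 /=; apply/negP => h3; move/eqP: nb; apply; apply/eqP.
  by rewrite eq_le h3 h2.
- rewrite h1 addbT; apply/negP => h3; move/eqP: na; apply; apply/eqP.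
  by rewrite eq_le h3 h2.
Qed.

Lemma xor_strict_lt (a y b : R) : btw a y b -> a != y -> b != y -> (y < a) (+) (y < b).
Proof.
move=> h na nb; rewrite !ltNge -addbT addbC.
have := xor_strict h na nb.
by case: (a <= y); case: (b <= y).
Qed.

Lemma xsum_if (i0 : nat) (b1 b2 : bool) (F : nat -> bool) : (i0 < n)%N -> b1 (+) b2 ->
  xsum (fun j => if j == i0 then b1 else F j) (+) xsum (fun j => if j == i0 then b2 else F j)
  = true.
Proof.
move=> hi hb; rewrite -xsum_split -(xsum_one hi); apply: xsum_eq => j _.
by case: (j == i0); [move: hb; case: b1; case: b2|rewrite addbb].
Qed.

Lemma cross_vert i0 w e : (i0 < n)%N -> vert i0 -> edge vs i0 w ->
  w <> v i0 -> w <> v i0.+1 -> 0 < e ->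
  exists r, [/\ ~ boundary vs r, par r, `|r.1 - w.1| < e & `|r.2 - w.2| < e].
Proof.
move=> hi vi ew n0 n1 e0.
have vx : (v i0).1 = (v i0.+1).1 by apply/eqP.
have wx : w.1 = (v i0).1 by move: (edge_x_btw ew); rewrite /btw vx; lra.
have ny0 : (v i0).2 != w.2.
  by apply/eqP => h; apply: n0; rewrite (pt_eta w) wx -h -pt_eta.
have ny1 : (v i0.+1).2 != w.2.
  by apply/eqP => h; apply: n1; rewrite (pt_eta w) wx vx -h -pt_eta.
have xo : ((v i0).2 <= w.2) (+) ((v i0.+1).2 <= w.2).
  exact: xor_strict (edge_y_btw ew) ny0 ny1.
pose Q j (r' : pt R) := (j != i0 -> ~ edge vs j r') /\
   (r'.2 = w.2 -> cr j r' = if j == i0 then r'.1 < w.1 else cr j w).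
have HQ : forall j, (j < n)%N -> nearp (Q j) w.
  move=> j hj; have [ej|nj] := eqVneq j i0.
    exists 1 => // r' _ _; rewrite /Q; split; first by rewrite ej eqxx.
    by move=> hr; rewrite ej eqxx /cr vi hr -wx xo andbT.
  have hne := near_not_edge (only_edge hi hj (elimN eqP nj) ew n0 n1).
  have [exj|nxj] := eqVneq (v j).1 w.1.
  - apply: nearp_mono hne => r' hr; rewrite /Q; split => // hr2; rewrite (negbTE nj).
    have -> : cr j w = false by rewrite /cr exj ltxx andbF.
    rewrite /cr; case vj: (vert j) => //=.
    have nb : ~ btw (v j).2 w.2 (v j.+1).2.
      move=> b; apply: (only_edge hi hj (elimN eqP nj) ew n0 n1); apply/edgeP; split => //.
      move/eqP: vj => <-; rewrite /btw exj; lra.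
    rewrite hr2; have [[a b]|[a b]] := nbtw_cases nb.
    + by rewrite !(leNgt _ w.2) a b /= andbF.
    + by rewrite (ltW a) (ltW b) /= andbF.
  - apply: nearp_mono (nearp_and hne (@nearp_x_lt (v j).1 w (elimN eqP nxj))).
    move=> r' [hr hx]; rewrite /Q; split => // hr2; rewrite (negbTE nj) /cr hx hr2 //.
have [d0 d00 Hd] := nearp_all HQ.
pose d := Num.min e d0 / 2.
have d0' : 0 < d by rewrite divr_gt0 // lt_min e0.
have dd : d < e /\ d < d0.
  have : Num.min e d0 <= e /\ Num.min e d0 <= d0 by split; rewrite ge_min lexx ?orbT.
  rewrite /d; lra.
pose rm := (w.1 - d, w.2); pose rp := (w.1 + d, w.2).
have Hm : forall j, (j < n)%N -> Q j rm.
  by apply: Hd; rewrite /= ?subrr ?normr0 //; rewrite addrAC subrr add0r normrN gtr0_norm //; lra.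
have Hp : forall j, (j < n)%N -> Q j rp.
  by apply: Hd; rewrite /= ?subrr ?normr0 //; rewrite addrAC subrr add0r gtr0_norm //; lra.
have nbm : ~ boundary vs rm.
  move=> [j hj ej]; have [eji|nji] := eqVneq j i0.
    by move: ej; rewrite eji => /edge_x_btw; rewrite /btw /= -vx -wx; lra.
  by case: (Hm j hj) => /(_ nji).
have nbp : ~ boundary vs rp.
  move=> [j hj ej]; have [eji|nji] := eqVneq j i0.
    by move: ej; rewrite eji => /edge_x_btw; rewrite /btw /= -vx -wx; lra.
  by case: (Hp j hj) => /(_ nji).
have pm : par rm = xsum (fun j => if j == i0 then true else cr j w).
  apply: xsum_eq => j hj; case: (Hm j hj) => _ /(_ erefl) ->.
  by case: (j == i0) => //=; rewrite ltrBlDr ltrDl.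
have pp : par rp = xsum (fun j => if j == i0 then false else cr j w).
  apply: xsum_eq => j hj; case: (Hp j hj) => _ /(_ erefl) ->.
  case: (j == i0) => //=; apply/negbTE; rewrite -leNgt lerDl; exact: ltW.
have X := @xsum_if i0 true false (fun j => cr j w) hi isT.
rewrite -pm -pp in X.
have dm : `|rm.1 - w.1| < e by rewrite /= addrAC subrr add0r normrN gtr0_norm //; lra.
have dp : `|rp.1 - w.1| < e by rewrite /= addrAC subrr add0r gtr0_norm //; lra.
have d2 : `|rm.2 - w.2| < e by rewrite /= subrr normr0.
case hm: (par rm); first by exists rm.
by exists rp; split => //; move: X; rewrite hm.
Qed.

Lemma Jr_hor_sum w i0 : (i0 < n)%N -> ~~ vert i0 -> edge vs i0 w ->
  w <> v i0 -> w <> v i0.+1 -> xsum (fun j => Jr j w) = true.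
Proof.
move=> hi vi ew n0 n1.
have vy : (v i0).2 = (v i0.+1).2 := not_vert vi.
have wy : w.2 = (v i0).2 by move: (edge_y_btw ew); rewrite /btw vy; lra.
have nx0 : (v i0).1 != w.1.
  by apply/eqP => h; apply: n0; rewrite (pt_eta w) wy -h -pt_eta.
have nx1 : (v i0.+1).1 != w.1.
  by apply/eqP => h; apply: n1; rewrite (pt_eta w) wy vy -h -pt_eta.
pose g (z : pt R) := (z.2 == w.2) && (w.1 < z.1).
pose H j := ~~ vert j && (g (v j) (+) g (v j.+1)).
have E : forall j, (j < n)%N -> Jr j w (+) H j = g (v j) (+) g (v j.+1).
  move=> j hj; rewrite /H /Jr /g; case vj: (vert j) => /=.
  - move/eqP: vj => ->.
    by case: (w.1 < _); case: (_ == w.2); case: (_ == w.2).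
  - by [].
have E2 : xsum (fun j => Jr j w) = xsum H.
  have := xsum_even g; rewrite -(xsum_eq E) xsum_split.
  by case: (xsum _); case: (xsum _).
rewrite E2 -(xsum_one hi); apply: xsum_eq => j hj.
have [ej|nj] := eqVneq j i0.
  rewrite ej /H vi /g -vy -wy eqxx /=.
  exact: xor_strict_lt (edge_x_btw ew) nx0 nx1.
rewrite /H; case vj: (vert j) => //=.
have vyj : (v j).2 = (v j.+1).2 := not_vert (negbT vj).
rewrite /g -vyj; case: eqP => //= eyj.
have ne := only_edge hi hj (elimN eqP nj) ew n0 n1.
case: (ltP w.1 (v j).1) => h1; case: (ltP w.1 (v j.+1).1) => h2 //=.
- by exfalso; apply: ne; apply/edgeP; split; rewrite /btw; [lra| rewrite -vyj eyj; lra].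
- by exfalso; apply: ne; apply/edgeP; split; rewrite /btw; [lra| rewrite -vyj eyj; lra].
Qed.

Lemma cross_hor i0 w e : (i0 < n)%N -> ~~ vert i0 -> edge vs i0 w ->
  w <> v i0 -> w <> v i0.+1 -> 0 < e ->
  exists r, [/\ ~ boundary vs r, par r, `|r.1 - w.1| < e & `|r.2 - w.2| < e].
Proof.
move=> hi vi ew n0 n1 e0.
have vy : (v i0).2 = (v i0.+1).2 := not_vert vi.
have wy : w.2 = (v i0).2 by move: (edge_y_btw ew); rewrite /btw vy; lra.
pose Q j (r' : pt R) := (j != i0 -> ~ edge vs j r') /\
   (r'.1 = w.1 -> cr j r' = cr j w (+) ((r'.2 < w.2) && Jr j w)).
have HQ : forall j, (j < n)%N -> nearp (Q j) w.
  move=> j hj; have [ej|nj] := eqVneq j i0.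
    apply: nearp_mono (@near_cr j w) => r' h; rewrite /Q; split.
      by rewrite ej eqxx.
    by move=> hx; apply: h; rewrite hx.
  have hne := near_not_edge (only_edge hi hj (elimN eqP nj) ew n0 n1).
  apply: nearp_mono (nearp_and hne (@near_cr j w)) => r' [h1 h2]; rewrite /Q.
  by split => // hx; apply: h2; rewrite hx.
have [d0 d00 Hd] := nearp_all HQ.
pose d := Num.min e d0 / 2.
have d0' : 0 < d by rewrite divr_gt0 // lt_min e0.
have dd : d < e /\ d < d0.
  have : Num.min e d0 <= e /\ Num.min e d0 <= d0 by split; rewrite ge_min lexx ?orbT.
  rewrite /d; lra.
pose rm := (w.1, w.2 - d); pose rp := (w.1, w.2 + d).
have Hm : forall j, (j < n)%N -> Q j rm.
  by apply: Hd; rewrite /= ?subrr ?normr0 //; rewrite addrAC subrr add0r normrN gtr0_norm //; lra.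
have Hp : forall j, (j < n)%N -> Q j rp.
  by apply: Hd; rewrite /= ?subrr ?normr0 //; rewrite addrAC subrr add0r gtr0_norm //; lra.
have nbm : ~ boundary vs rm.
  move=> [j hj ej]; have [eji|nji] := eqVneq j i0.
    by move: ej; rewrite eji => /edge_y_btw; rewrite /btw /= -vy -wy; lra.
  by case: (Hm j hj) => /(_ nji).
have nbp : ~ boundary vs rp.
  move=> [j hj ej]; have [eji|nji] := eqVneq j i0.
    by move: ej; rewrite eji => /edge_y_btw; rewrite /btw /= -vy -wy; lra.
  by case: (Hp j hj) => /(_ nji).
have pm : par rm = par w (+) xsum (fun j => Jr j w).
  rewrite /par -xsum_split; apply: xsum_eq => j hj; case: (Hm j hj) => _ /(_ erefl) ->.
  by rewrite /= ltrBlDr ltrDl d0'.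
have pp : par rp = par w.
  rewrite /par; apply: xsum_eq => j hj; case: (Hp j hj) => _ /(_ erefl) ->.
  have -> : (rp.2 < w.2) = false by apply/negbTE; rewrite -leNgt /= lerDl ltW.
  by rewrite addbF.
have X : par rm (+) par rp = true.
  by rewrite pm pp (Jr_hor_sum hi vi ew n0 n1) addbC addbA addbb.
have dm : `|rm.2 - w.2| < e by rewrite /= addrAC subrr add0r normrN gtr0_norm //; lra.
have dp : `|rp.2 - w.2| < e by rewrite /= addrAC subrr add0r gtr0_norm //; lra.
have d1 : `|rm.1 - w.1| < e by rewrite /= subrr normr0.
case hm: (par rm); first by exists rm.
by exists rp; split => //; move: X; rewrite hm.
Qed.

Lemma edge_near_strict i0 w e : edge vs i0 w -> 0 < e ->
  exists w', [/\ edge vs i0 w', w' <> v i0, w' <> v i0.+1,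
    `|w'.1 - w.1| < e & `|w'.2 - w.2| < e].
Proof.
move=> [t [/andP [t0 t1] ->]] e0.
set a := v i0; set b := v i0.+1.
have ab : a <> b := @vtx_neq i0.
pose D := `|b.1 - a.1| + `|b.2 - a.2|.
have D0 : 0 <= D by rewrite addr_ge0.
pose q := e / (D + 1).
have q0 : 0 < q by rewrite divr_gt0 //; lra.
have qD : q * (D + 1) = e by rewrite /q mulfVK //; apply/eqP => h; lra.
pose dl := Num.min (1/4) q.
have dl0 : 0 < dl by rewrite lt_min q0 andbT divr_gt0.
have dl1 : dl <= 1/4 /\ dl <= q by split; rewrite ge_min lexx ?orbT.
have dlD : dl * D < e.
  have : dl * (D + 1) <= q * (D + 1) by rewrite ler_wpM2r //; [lra|case: dl1].
  rewrite qD; nra.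
pose t' := if t <= 1/2 then t + dl else t - dl.
have t'0 : 0 < t' < 1.
  rewrite /t'; case: ifP => h; apply/andP; case: dl1 => h1 h2.
  - split; [lra|]; have : (1 / 2 : R) + 1/4 < 1 by lra. lra.
  - move/negbT: h; rewrite -ltNge => h; split; [|lra].
    have : (1/4 : R) < 1/2 by lra. lra.
have tt : `|t' - t| = dl.
  rewrite /t'; case: ifP => _; first by rewrite addrAC subrr add0r gtr0_norm.
  by rewrite addrAC subrr add0r normrN gtr0_norm.
move/andP: t'0 => [t'a t'b].
exists (a.1 + t' * (b.1 - a.1), a.2 + t' * (b.2 - a.2)); split.
- by exists t'; split => //; apply/andP; split; apply: ltW.
- move=> h; have /= h1 := f_equal fst h; have /= h2 := f_equal snd h; apply: ab.
  have e1 : t' * (b.1 - a.1) = 0 by lra.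
  have e2 : t' * (b.2 - a.2) = 0 by lra.
  move/eqP: e1; rewrite mulf_eq0 gt_eqF //= subr_eq0 => /eqP e1.
  move/eqP: e2; rewrite mulf_eq0 gt_eqF //= subr_eq0 => /eqP e2.
  by rewrite (pt_eta a) (pt_eta b) e1 e2.
- move=> h; have /= h1 := f_equal fst h; have /= h2 := f_equal snd h; apply: ab.
  have e1 : (1 - t') * (b.1 - a.1) = 0 by lra.
  have e2 : (1 - t') * (b.2 - a.2) = 0 by lra.
  have nt : 1 - t' != 0 by apply/eqP; lra.
  move/eqP: e1; rewrite mulf_eq0 (negbTE nt) /= subr_eq0 => /eqP e1.
  move/eqP: e2; rewrite mulf_eq0 (negbTE nt) /= subr_eq0 => /eqP e2.
  by rewrite (pt_eta a) (pt_eta b) e1 e2.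
- rewrite /= opprD addrACA subrr add0r -mulrBl normrM tt.
  have hD : `|b.1 - a.1| <= D by rewrite /D; have := normr_ge0 (b.2 - a.2); lra.
  have : dl * `|b.1 - a.1| <= dl * D by rewrite ler_wpM2l // ltW.
  lra.
- rewrite /= opprD addrACA subrr add0r -mulrBl normrM tt.
  have hD : `|b.2 - a.2| <= D by rewrite /D; have := normr_ge0 (b.1 - a.1); lra.
  have : dl * `|b.2 - a.2| <= dl * D by rewrite ler_wpM2l // ltW.
  lra.
Qed.

Lemma region_closure w : region vs w -> forall e, 0 < e ->
  exists z, (region vs)^° z /\ `|z.1 - w.1| < e /\ `|z.2 - w.2| < e.
Proof.
move=> rw e e0.
have [hb|nb] := pselect (boundary vs w); last first.
  by exists w; split; [exact: nb_region_interior|rewrite !subrr normr0].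

case: hb => i0 hi ew.
have e2 : 0 < e / 2 by rewrite divr_gt0.
have [w' [ew' n0 n1 d1 d2]] := edge_near_strict ew e2.
have [r [nbr pr r1 r2]] : exists r,
  [/\ ~ boundary vs r, par r, `|r.1 - w'.1| < e / 2 & `|r.2 - w'.2| < e / 2].
  case vi: (vert i0).
  - exact: cross_vert hi vi ew' n0 n1 e2.
  - exact: cross_hor hi (negbT vi) ew' n0 n1 e2.
exists r; split; first exact: odd_interior.
have t1 := ler_distD w'.1 r.1 w.1; have t2 := ler_distD w'.2 r.2 w.2.
split; lra.
Qed.
End N.



Section G.
Variable R : realType.
Implicit Types p q r z : pt R.
Variable om : set (pt R).
Hypothesis Hconv : rect_convex om.
Variables a b c d y0 y1 : R.
Hypothesis hab : a < b.
Hypothesis hy : (y0 = c /\ y1 = d) \/ (y0 = d /\ y1 = c).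
Hypothesis hcd : c < d.
Hypothesis Hbox : om `<=` rect a b c d.
Local Notation Dg := (seg (a, y0) (b, y1)).
Hypothesis HD : Dg `<=` om.
Local Notation I := (om^°).

Definition hD (Y : R) := a + (Y - y0) * ((b - a) / (y1 - y0)).
Definition gD (X : R) := y0 + (X - a) * ((y1 - y0) / (b - a)).
Definition kk := (b - a) / (y1 - y0).
Definition kk' := (y1 - y0) / (b - a).

Lemma y01 : y1 - y0 != 0.
Proof. by rewrite subr_eq0; case: hy => [[-> ->]|[-> ->]]; [rewrite (gt_eqF hcd)|rewrite (lt_eqF hcd)]. Qed.
Lemma ba0 : b - a != 0.
Proof. by rewrite subr_eq0 (gt_eqF hab). Qed.

Lemma kk_kk' : kk * kk' = 1.
Proof. rewrite /kk /kk'; have := y01; have := ba0 => h1 h2; field; exact/andP. Qed.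

Lemma hD_lin Y Y' : hD Y' = hD Y + (Y' - Y) * kk.
Proof. rewrite /hD /kk; ring. Qed.

Lemma gD_lin X X' : gD X' = gD X + (X' - X) * kk'.
Proof. rewrite /gD /kk'; ring. Qed.

Lemma hg X Y : (hD Y - X) * kk' = Y - gD X.
Proof.
rewrite /hD /gD /kk'; have := y01; have := ba0 => h1 h2.
field; exact/andP.
Qed.

Lemma inv_ge0 (x : R) : 0 <= x -> 0 <= x^-1.
Proof. by rewrite invr_ge0. Qed.

Lemma hD_in Y : c <= Y <= d -> Dg (hD Y, Y).
Proof.
move=> /andP [h1 h2]; exists ((Y - y0) / (y1 - y0)).
have n0 := y01.
split.
- case: hy => [[e0 e1]|[e0 e1]]; rewrite e0 e1 in n0 *.
  + have dc : 0 < d - c by lra.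
    rewrite divr_ge0 /=; [|lra|lra].
    by rewrite ler_pdivrMr // mul1r; lra.
  + have dc : c - d < 0 by lra.
    rewrite -(mulrNN (Y - d)) -invrN divr_ge0 /=; [|lra|lra].
    by rewrite ler_pdivrMr ?mul1r; lra.
- by rewrite /hD; congr pair; rewrite /=; field.
Qed.

Lemma gD_in X : a <= X <= b -> Dg (X, gD X).
Proof.
move=> /andP [h1 h2]; exists ((X - a) / (b - a)).
have n0 := ba0.
split.
- rewrite divr_ge0 /=; [|lra|lra].
  by rewrite ler_pdivrMr ?mul1r; lra.
- by rewrite /gD; congr pair; rewrite /=; field.
Qed.

Lemma Dg_h w : Dg w -> w.1 = hD w.2.
Proof.
move=> [t [_ ->]] /=; rewrite /hD; have := y01; have := ba0 => h1 h2.
by field.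
Qed.

Lemma Dg_g w : Dg w -> w.2 = gD w.1.
Proof.
move=> [t [_ ->]] /=; rewrite /gD; have := y01; have := ba0 => h1 h2.
by field.
Qed.

Lemma Hconv_h p q t : om p -> om q -> p.2 = q.2 -> btw p.1 t q.1 -> om (t, p.2).
Proof.
move=> hp hq e hb; have [s [sh tr]] := Hconv hp hq.
by apply: tr; apply: (trace_straight_h sh e).
Qed.

Lemma Hconv_v p q t : om p -> om q -> p.1 = q.1 -> btw p.2 t q.2 -> om (p.1, t).
Proof.
move=> hp hq e hb; have [s [sh tr]] := Hconv hp hq.
by apply: tr; apply: (trace_straight_v sh e).
Qed.

Lemma int_box z : I z -> a < z.1 < b /\ c < z.2 < d.
Proof.
move/interiorP => [e e0 H].
have e2 : 0 < e / 2 by rewrite divr_gt0.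
have e2e : e / 2 < e by rewrite ltr_pdivrMr //; lra.
have n2 : `|e / 2| < e by rewrite gtr0_norm.
have n2' : `|- (e / 2)| < e by rewrite normrN gtr0_norm.
have z0 : `|z.1 - z.1| < e by rewrite subrr normr0.
have z0' : `|z.2 - z.2| < e by rewrite subrr normr0.
have h1 := Hbox (H (z.1 - e/2, z.2) ltac:(by rewrite /= addrAC subrr add0r) z0').
have h2 := Hbox (H (z.1 + e/2, z.2) ltac:(by rewrite /= addrAC subrr add0r) z0').
have h3 := Hbox (H (z.1, z.2 - e/2) z0 ltac:(by rewrite /= addrAC subrr add0r)).
have h4 := Hbox (H (z.1, z.2 + e/2) z0 ltac:(by rewrite /= addrAC subrr add0r)).
move: h1 h2 h3 h4; rewrite /rect /= => [[/andP [a1 a2] _] [/andP [b1 b2] _] [_ /andP [c1 c2]] [_ /andP [d1 d2]]].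
by split; apply/andP; split; lra.
Qed.

Lemma minP5 (x1 x2 x3 x4 x5 : R) : 0 < x1 -> 0 < x2 -> 0 < x3 -> 0 < x4 -> 0 < x5 ->
  let m := Num.min x1 (Num.min x2 (Num.min x3 (Num.min x4 x5))) in
  [/\ 0 < m, m <= x1, m <= x2, m <= x3 & m <= x4 /\ m <= x5].
Proof.
move=> h1 h2 h3 h4 h5 m; rewrite /m; split.
- by rewrite !lt_min h1 h2 h3 h4 h5.
- by rewrite ge_min lexx.
- by rewrite ge_min ge_min lexx orbT.
- by rewrite ge_min ge_min ge_min lexx !orbT.
- by split; rewrite !ge_min lexx !orbT.
Qed.

Lemma Hint z q : I z -> q.2 = z.2 ->
  (z.1 < q.1 < hD z.2) \/ (hD z.2 < q.1 < z.1) -> I q.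
Proof.
move=> Iz qy hq; have [_ /andP [yc yd]] := int_box Iz.
move/interiorP: Iz => [e0 e00 H].
set Y := z.2 in yc yd hq qy *.
have kk0 : 0 <= `|kk| by [].
pose gap := Num.min (`|q.1 - z.1|) (`|hD Y - q.1|).
have gz : 0 < `|q.1 - z.1|.
  by rewrite normr_gt0 subr_eq0; apply/eqP; case: hq => /andP [h1 h2]; lra.
have gh : 0 < `|hD Y - q.1|.
  by rewrite normr_gt0 subr_eq0; apply/eqP; case: hq => /andP [h1 h2]; lra.
have g3 : 0 < `|hD Y - q.1| / (1 + `|kk|) by rewrite divr_gt0 //; lra.
have [dl0 dle dlz dlh [dlc dld]] :=
  minP5 e00 gz g3 (ltac:(lra) : 0 < Y - c) (ltac:(lra) : 0 < d - Y).
set dl := Num.min _ _ in dl0 dle dlz dlh dlc dld.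
have dlh' : dl * (1 + `|kk|) <= `|hD Y - q.1|.
  by move: dlh; rewrite ler_pdivlMr //; lra.
rewrite mulrDr mulr1 in dlh'.
apply/interiorP; exists dl => // r h1 h2.
rewrite qy in h2.
have zr : om (z.1, r.2).
  apply: H; first by rewrite subrr normr0.
  exact: lt_le_trans h2 dle.
have Yr : c <= r.2 <= d by move: h2; rewrite ltr_norml => /andP [u1 u2]; apply/andP; lra.
have Dr : om (hD r.2, r.2) by apply/HD/hD_in.
have hl := hD_lin Y r.2.
have kb : `|(r.2 - Y) * kk| <= dl * `|kk|.
  by rewrite normrM; apply: ler_wpM2r => //; apply: ltW.
move: kb h1 dlz dlh'; rewrite !ler_norml ltr_norml => /andP [k1 k2] /andP [r1 r2] dlz dlh'.
rewrite (pt_eta r).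
have := Hconv_h zr Dr erefl; apply; rewrite /=.
case: hq => /andP [q1 q2].
- rewrite (ger0_norm (x := q.1 - z.1)) in dlz; last lra.
  rewrite (ger0_norm (x := hD Y - q.1)) in dlh'; last lra.
  left; apply/andP; split; lra.
- rewrite (ler0_norm (x := q.1 - z.1)) in dlz; last lra.
  rewrite (ler0_norm (x := hD Y - q.1)) in dlh'; last lra.
  right; apply/andP; split; lra.
Qed.

Lemma Vint z q : I z -> q.1 = z.1 ->
  (z.2 < q.2 < gD z.1) \/ (gD z.1 < q.2 < z.2) -> I q.
Proof.
move=> Iz qx hq; have [/andP [xa xb] _] := int_box Iz.
move/interiorP: Iz => [e0 e00 H].
set X := z.1 in xa xb hq qx *.
have kk0 : 0 <= `|kk'| by [].
have gz : 0 < `|q.2 - z.2|.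
  by rewrite normr_gt0 subr_eq0; apply/eqP; case: hq => /andP [h1 h2]; lra.
have gh : 0 < `|gD X - q.2|.
  by rewrite normr_gt0 subr_eq0; apply/eqP; case: hq => /andP [h1 h2]; lra.
have g3 : 0 < `|gD X - q.2| / (1 + `|kk'|) by rewrite divr_gt0 //; lra.
have [dl0 dle dlz dlh [dlc dld]] :=
  minP5 e00 gz g3 (ltac:(lra) : 0 < X - a) (ltac:(lra) : 0 < b - X).
set dl := Num.min _ _ in dl0 dle dlz dlh dlc dld.
have dlh' : dl * (1 + `|kk'|) <= `|gD X - q.2|.
  by move: dlh; rewrite ler_pdivlMr //; lra.
rewrite mulrDr mulr1 in dlh'.
apply/interiorP; exists dl => // r h1 h2.
rewrite qx in h1.
have zr : om (r.1, z.2).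
  apply: H; last by rewrite subrr normr0.
  exact: lt_le_trans h1 dle.
have Xr : a <= r.1 <= b by move: h1; rewrite ltr_norml => /andP [u1 u2]; apply/andP; lra.
have Dr : om (r.1, gD r.1) by apply/HD/gD_in.
have hl := gD_lin X r.1.
have kb : `|(r.1 - X) * kk'| <= dl * `|kk'|.
  by rewrite normrM; apply: ler_wpM2r => //; apply: ltW.
move: kb h2 dlz dlh'; rewrite !ler_norml ltr_norml => /andP [k1 k2] /andP [r1 r2] dlz dlh'.
rewrite (pt_eta r).
have := Hconv_v zr Dr erefl; apply; rewrite /=.
case: hq => /andP [q1 q2].
- rewrite (ger0_norm (x := q.2 - z.2)) in dlz; last lra.
  rewrite (ger0_norm (x := gD X - q.2)) in dlh'; last lra.
  left; apply/andP; split; lra.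
- rewrite (ler0_norm (x := q.2 - z.2)) in dlz; last lra.
  rewrite (ler0_norm (x := gD X - q.2)) in dlh'; last lra.
  right; apply/andP; split; lra.
Qed.

Lemma Hend x1 x2 z : I z -> btw x1 z.1 x2 -> ~ btw x1 (hD z.2) x2 ->
  (I (x1, z.2) /\ btw x2 x1 (hD z.2)) \/ (I (x2, z.2) /\ btw x1 x2 (hD z.2)).
Proof.
move=> Iz bz /nbtw_cases hn.
have Ie : forall x, btw z.1 x (hD z.2) -> x != hD z.2 -> I (x, z.2).
  move=> x hx nx; have [ex|nex] := eqVneq x z.1; first by rewrite ex -pt_eta.
  apply: (Hint Iz) => //=.
  move: hx nx nex; rewrite /btw => [[/andP [u1 u2]|/andP [u1 u2]]] nx nex.
  - left; apply/andP; split; rewrite lt_neqAle ?u1 ?u2 ?andbT //; by rewrite eq_sym.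
  - right; apply/andP; split; rewrite lt_neqAle ?u1 ?u2 ?andbT //; by rewrite eq_sym.
have ne : forall x, (x < hD z.2 \/ hD z.2 < x) -> x != hD z.2.
  by move=> x [h|h]; apply/eqP => e; move: h; rewrite e ltxx.
move: bz; rewrite /btw => bz.
have [x12|x12] := lerP x1 x2; case: hn => [[h1 h2]|[h1 h2]].
- left; split; [apply: Ie; [rewrite /btw; lra|apply: ne; lra]|rewrite /btw; lra].
- right; split; [apply: Ie; [rewrite /btw; lra|apply: ne; lra]|rewrite /btw; lra].
- right; split; [apply: Ie; [rewrite /btw; lra|apply: ne; lra]|rewrite /btw; lra].
- left; split; [apply: Ie; [rewrite /btw; lra|apply: ne; lra]|rewrite /btw; lra].
Qed.

Lemma Vend u1 u2 z : I z -> btw u1 z.2 u2 -> ~ btw u1 (gD z.1) u2 ->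
  (I (z.1, u1) /\ btw u2 u1 (gD z.1)) \/ (I (z.1, u2) /\ btw u1 u2 (gD z.1)).
Proof.
move=> Iz bz /nbtw_cases hn.
have Ie : forall y, btw z.2 y (gD z.1) -> y != gD z.1 -> I (z.1, y).
  move=> y hx nx; have [ex|nex] := eqVneq y z.2; first by rewrite ex -pt_eta.
  apply: (Vint Iz) => //=.
  move: hx nx nex; rewrite /btw => [[/andP [w1 w2]|/andP [w1 w2]]] nx nex.
  - left; apply/andP; split; rewrite lt_neqAle ?w1 ?w2 ?andbT //; by rewrite eq_sym.
  - right; apply/andP; split; rewrite lt_neqAle ?w1 ?w2 ?andbT //; by rewrite eq_sym.
have ne : forall x, (x < gD z.1 \/ gD z.1 < x) -> x != gD z.1.
  by move=> x [h|h]; apply/eqP => e; move: h; rewrite e ltxx.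
move: bz; rewrite /btw => bz.
have [x12|x12] := lerP u1 u2; case: hn => [[h1 h2]|[h1 h2]].
- left; split; [apply: Ie; [rewrite /btw; lra|apply: ne; lra]|rewrite /btw; lra].
- right; split; [apply: Ie; [rewrite /btw; lra|apply: ne; lra]|rewrite /btw; lra].
- right; split; [apply: Ie; [rewrite /btw; lra|apply: ne; lra]|rewrite /btw; lra].
- left; split; [apply: Ie; [rewrite /btw; lra|apply: ne; lra]|rewrite /btw; lra].
Qed.

Lemma straight_D p q z : ~ I p -> ~ I q -> p.2 = q.2 -> I z -> z.2 = p.2 ->
  btw p.1 z.1 q.1 -> btw p.1 (hD p.2) q.1.
Proof.
move=> np nq e Iz zy bz; apply: contrapT => nb.
rewrite -zy in nb.
case: (Hend Iz bz nb) => [[h _]|[h _]].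
- by apply: np; rewrite (pt_eta p) -zy.
- by apply: nq; rewrite (pt_eta q) -e -zy.
Qed.

Lemma straight_Dv p q z : ~ I p -> ~ I q -> p.1 = q.1 -> I z -> z.1 = p.1 ->
  btw p.2 z.2 q.2 -> btw p.2 (gD p.1) q.2.
Proof.
move=> np nq e Iz zx bz; apply: contrapT => nb.
rewrite -zx in nb.
case: (Vend Iz bz nb) => [[h _]|[h _]].
- by apply: np; rewrite (pt_eta p) -zx.
- by apply: nq; rewrite (pt_eta q) -e -zx.
Qed.

Lemma L_meets p q : ~ I p -> ~ I q -> p.1 <> q.1 -> p.2 <> q.2 ->
  (exists z, Lset1 p q z /\ I z) -> (exists z, Lset2 p q z /\ I z) ->
  exists w, Lset1 p q w /\ Dg w.
Proof.
move=> np nq n1 n2 [z [Lz Iz]] [z' [Lz' Iz']].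
apply: contrapT => nD.
have nD' : forall w, Lset1 p q w -> Dg w -> False by move=> w h1 h2; apply: nD; exists w.
have nH : forall w, I w -> w.2 = p.2 -> ~ btw p.1 (hD p.2) q.1.
  move=> w Iw wy hb; have [_ /andP [c1 c2]] := int_box Iw.
  apply: (nD' (hD p.2, p.2)); first by left; split.
  by apply: hD_in; apply/andP; rewrite -wy; split; apply: ltW.
have nV : forall w, I w -> w.1 = q.1 -> ~ btw p.2 (gD q.1) q.2.
  move=> w Iw wx hb; have [/andP [c1 c2] _] := int_box Iw.
  apply: (nD' (q.1, gD q.1)); first by right; split.
  by apply: gD_in; apply/andP; rewrite -wx; split; apply: ltW.
have bpp : forall u v : R, btw u u v by move=> u v; rewrite /btw lexx /=; lra.
have bvv : forall u v : R, btw u v v by move=> u v; rewrite /btw lexx /=; lra.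
have [Ik1 [Hc Vc]] : I (q.1, p.2) /\ btw p.1 q.1 (hD p.2) /\ btw q.2 p.2 (gD q.1).
  case: Lz => [[bz zy]|[zx bz]].
  - have := Hend Iz bz; rewrite zy => /(_ (nH z Iz zy)) [[h _]|[h hc]].
      by exfalso; apply: np; rewrite (pt_eta p).
    have := @Vend p.2 q.2 (q.1, p.2) h (bpp _ _) (nV _ h erefl) => /= [[[h' vc]|[h' _]]].
      by [].
    by exfalso; apply: nq; rewrite (pt_eta q).
  - have := Vend Iz bz; rewrite zx => /(_ (nV z Iz zx)) [[h vc]|[h _]]; last first.
      by exfalso; apply: nq; rewrite (pt_eta q).
    have := @Hend p.1 q.1 (q.1, p.2) h (bvv _ _) (nH _ h erefl) => /= [[[h' _]|[h' hc]]].
      by exfalso; apply: np; rewrite (pt_eta p).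
    by [].
have [_ /andP [ck1 dk1]] := int_box Ik1.
have [/andP [ak1 bk1] _] := int_box Ik1.
have sH : hD p.2 != q.1.
  apply/eqP => e; apply: (nD' (q.1, p.2)); first by left; split.
  by rewrite -e; apply: hD_in; apply/andP; split; apply: ltW.
have sV : gD q.1 != p.2.
  apply/eqP => e; apply: (nD' (q.1, p.2)); first by left; split.
  by rewrite -e; apply: gD_in; apply/andP; split; apply: ltW.
have HG := hg q.1 p.2.
have GL := gD_lin q.1 p.1.
have HL := hD_lin p.2 q.2.
have KK := kk_kk'.
have n1' : p.1 != q.1 by apply/eqP.
have n2' : p.2 != q.2 by apply/eqP.
have [A B] : ((q.2 < p.2 < gD p.1) \/ (gD p.1 < p.2 < q.2)) /\
             ((p.1 < q.1 < hD q.2) \/ (hD q.2 < q.1 < p.1)).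
  move: Hc Vc; rewrite /btw.
  case=> /andP [h1 h2]; case=> /andP [h3 h4].
  - have l1 : p.1 < q.1 by rewrite lt_neqAle n1' h1.
    have l2 : q.1 < hD p.2 by rewrite lt_neqAle eq_sym sH h2.
    have l3 : q.2 < p.2 by rewrite lt_neqAle eq_sym n2' h3.
    have l4 : p.2 < gD q.1 by rewrite lt_neqAle eq_sym sV h4.
    have k0 : kk' < 0 by nra.
    have k1 : kk < 0 by nra.
    have g : p.2 < gD p.1 by nra.
    have h : q.1 < hD q.2 by nra.
    by split; [left; rewrite l3 g|left; rewrite l1 h].
  - have l1 : p.1 < q.1 by rewrite lt_neqAle n1' h1.
    have l2 : q.1 < hD p.2 by rewrite lt_neqAle eq_sym sH h2.
    have l3 : p.2 < q.2 by rewrite lt_neqAle n2' h4.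
    have l4 : gD q.1 < p.2 by rewrite lt_neqAle sV h3.
    have k0 : 0 < kk' by nra.
    have k1 : 0 < kk by nra.
    have g : gD p.1 < p.2 by nra.
    have h : q.1 < hD q.2 by nra.
    by split; [right; rewrite l3 g|left; rewrite l1 h].
  - have l1 : q.1 < p.1 by rewrite lt_neqAle eq_sym n1' h2.
    have l2 : hD p.2 < q.1 by rewrite lt_neqAle sH h1.
    have l3 : q.2 < p.2 by rewrite lt_neqAle eq_sym n2' h3.
    have l4 : p.2 < gD q.1 by rewrite lt_neqAle eq_sym sV h4.
    have k0 : 0 < kk' by nra.
    have k1 : 0 < kk by nra.
    have g : p.2 < gD p.1 by nra.
    have h : hD q.2 < q.1 by nra.
    by split; [left; rewrite l3 g|right; rewrite l1 h].
  - have l1 : q.1 < p.1 by rewrite lt_neqAle eq_sym n1' h2.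
    have l2 : hD p.2 < q.1 by rewrite lt_neqAle sH h1.
    have l3 : p.2 < q.2 by rewrite lt_neqAle n2' h4.
    have l4 : gD q.1 < p.2 by rewrite lt_neqAle sV h3.
    have k0 : kk' < 0 by nra.
    have k1 : kk < 0 by nra.
    have g : gD p.1 < p.2 by nra.
    have h : hD q.2 < q.1 by nra.
    by split; [right; rewrite l3 g|right; rewrite l1 h].
case: Lz' => [[zx bz]|[bz zy]].
- have nb : ~ btw p.2 (gD z'.1) q.2 by rewrite zx /btw; lra.
  case: (Vend Iz' bz nb) => [[h _]|[_ h]].
  + by apply: np; rewrite (pt_eta p) -zx.
  + by move: h; rewrite zx /btw; lra.
- have nb : ~ btw p.1 (hD z'.2) q.1 by rewrite zy /btw; lra.
  case: (Hend Iz' bz nb) => [[_ h]|[h _]].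
  + by move: h; rewrite zy /btw; lra.
  + by apply: nq; rewrite (pt_eta q) -zy.
Qed.

Lemma Lset_swap1 p q w : Lset1 q p w -> Lset2 p q w.
Proof. by case=> [[h1 h2]|[h1 h2]]; [right|left]; split => //; apply: btw_sym. Qed.

Lemma Lset_swap2 p q w : Lset2 p q w -> Lset1 q p w.
Proof. by case=> [[h1 h2]|[h1 h2]]; [right|left]; split => //; apply: btw_sym. Qed.

Lemma Lset_swap3 p q w : Lset1 p q w -> Lset2 q p w.
Proof. by case=> [[h1 h2]|[h1 h2]]; [right|left]; split => //; apply: btw_sym. Qed.

Lemma skel_D : skeleton om [:: ((a, y0), (b, y1))].
Proof.
split.
  move=> ab; rewrite inE => /eqP -> /=; split; last exact: HD.
  by case => h _; move: hab; rewrite h ltxx.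
move=> p q np nq blk s sh am.
exists ((a, y0), (b, y1)); first by rewrite inE.
rewrite /=.
have [epq|npq] := eqVneq p q.
  have [sh0 [am0 tr0]] := nil_path p.
  rewrite -epq in blk; have [z [tz Iz]] := blk [::] sh0 am0.
  by exfalso; apply: np; rewrite -(tr0 z tz).
have [e2|n2] := eqVneq p.2 q.2.
  have [sh1 [am1 tr1]] := straight_h e2 (elimN eqP npq).
  have [z [tz Iz]] := blk _ sh1 am1.
  have [bz zy] := tr1 z tz.
  have hb := straight_D np nq e2 Iz zy bz.
  exists (hD p.2, p.2); split; first exact: (trace_straight_h sh e2).
  have [_ /andP [c1 c2]] := int_box Iz.
  by apply: hD_in; apply/andP; rewrite -zy; split; apply: ltW.
have [e1|n1] := eqVneq p.1 q.1.
  have [sh1 [am1 tr1]] := straight_v e1 (elimN eqP npq).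
  have [z [tz Iz]] := blk _ sh1 am1.
  have [zx bz] := tr1 z tz.
  have hb := straight_Dv np nq e1 Iz zx bz.
  exists (p.1, gD p.1); split; first exact: (trace_straight_v sh e1).
  have [/andP [c1 c2] _] := int_box Iz.
  by apply: gD_in; apply/andP; rewrite -zx; split; apply: ltW.
have n1' : p.1 <> q.1 by apply/eqP.
have n2' : p.2 <> q.2 by apply/eqP.
have [sL1 [aL1 tL1]] := path_L1 n1' n2'.
have [sL2 [aL2 tL2]] := path_L2 n1' n2'.
have [z1 [t1 I1]] := blk _ sL1 aL1.
have [z2 [t2 I2]] := blk _ sL2 aL2.
have M1 : exists z, Lset1 p q z /\ I z by exists z1; split => //; apply: tL1.
have M2 : exists z, Lset2 p q z /\ I z by exists z2; split => //; apply: tL2.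
case: (trace_L sh am n1' n2') => Ls.
- have [w [Lw Dw]] := L_meets np nq n1' n2' M1 M2.
  by exists w; split => //; apply: Ls.
- have M1' : exists z, Lset1 q p z /\ I z.
    by case: M2 => z [h1 h2]; exists z; split => //; apply: Lset_swap2.
  have M2' : exists z, Lset2 q p z /\ I z.
    by case: M1 => z [h1 h2]; exists z; split => //; apply: Lset_swap3.
  have [w [Lw Dw]] := L_meets nq np (nesym n1') (nesym n2') M1' M2'.
  by exists w; split => //; apply: Ls; apply: Lset_swap1.
Qed.

Lemma empty_not_skel : (exists z, I z) -> ~ skeleton om [::].
Proof.
move=> [z Iz] [_ sk].
have [/andP [za zb] /andP [zc zd]] := int_box Iz.
pose p := (a - 1, z.2); pose q := (b + 1, z.2).
have np : ~ I p.
  by move=> /interior_subset /Hbox [/andP [h _] _]; move: h; rewrite /=; lra.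
have nq : ~ I q.
  by move=> /interior_subset /Hbox [/andP [_ h] _]; move: h; rewrite /=; lra.
have npq : p <> q by move=> h; have := f_equal fst h; rewrite /=; lra.
have [sh1 [am1 _]] := @straight_h _ p q erefl npq.
have blk : forall s, shortest_rpath p q s -> at_most_one_corner p s ->
    trace p s `&` I !=set0.
  move=> s sh _; exists z; split => //.
  rewrite (pt_eta z); apply: (trace_straight_h sh erefl).
  by rewrite /btw /=; left; apply/andP; split; lra.
by have [ab] := sk p q np nq blk _ sh1 am1.
Qed.
End G.



Section F.
Variable R : realType.
Variable vs : seq (pt R).
Hypothesis Hvs : rect_obstacle vs.
Local Notation om := (region vs).
Local Notation M := (Msum vs).

Lemma vtx_bounds i : (i < size vs)%N ->
  - M <= (vtx vs i).1 <= M /\ - M <= (vtx vs i).2 <= M.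
Proof.
move=> hi; have [h1 h2] := vtx_le_M hi.
by move: h1 h2; rewrite !ler_norml.
Qed.

Lemma region_coord w : om w -> - M <= w.1 <= M /\ - M <= w.2 <= M.
Proof.
move=> rw; split; apply/andP; split; rewrite leNgt; apply/negP => h.
- apply: (ray_left Hvs _ rw) => i hi; have [/andP [h1 _] _] := vtx_bounds hi; lra.
- apply: (ray_right Hvs _ rw) => i hi; have [/andP [_ h1] _] := vtx_bounds hi; lra.
- apply: (ray_down Hvs _ rw) => i hi; have [_ /andP [h1 _]] := vtx_bounds hi; lra.
- apply: (ray_up Hvs _ rw) => i hi; have [_ /andP [_ h1]] := vtx_bounds hi; lra.
Qed.

Lemma btw_closed (x y s : R) : (forall e, 0 < e -> exists2 t, btw x t y & `|t - s| < e) ->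
  btw x s y.
Proof.
move=> H; apply: contrapT => /nbtw_cases [[h1 h2]|[h1 h2]].
- have e0 : 0 < Num.min (x - s) (y - s) by rewrite lt_min !subr_gt0 h1 h2.
  have [t bt ht] := H _ e0.
  have m1 : Num.min (x - s) (y - s) <= x - s by rewrite ge_min lexx.
  have m2 : Num.min (x - s) (y - s) <= y - s by rewrite ge_min lexx orbT.
  move: bt ht; rewrite /btw ltr_norml; lra.
- have e0 : 0 < Num.min (s - x) (s - y) by rewrite lt_min !subr_gt0 h1 h2.
  have [t bt ht] := H _ e0.
  have m1 : Num.min (s - x) (s - y) <= s - x by rewrite ge_min lexx.
  have m2 : Num.min (s - x) (s - y) <= s - y by rewrite ge_min lexx orbT.
  move: bt ht; rewrite /btw ltr_norml; lra.
Qed.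

Lemma forward u v : skeleton om [:: (u, v)] -> has_diagonal om.
Proof.
move=> [ins sk].
have [uv segom] := ins (u, v) (mem_head _ _).
have Hy : forall z, om^° z -> btw u.2 z.2 v.2.
  move=> z Iz; have [/andP [zx1 zx2] _] := region_coord (interior_subset Iz).
  pose p := (- M - 1, z.2); pose q := (M + 1, z.2).
  have np : ~ om^° p.
    move=> /interior_subset /region_coord [/andP [h _] _]; move: h; rewrite /=; lra.
  have nq : ~ om^° q.
    move=> /interior_subset /region_coord [/andP [_ h] _]; move: h; rewrite /=; lra.
  have npq : p <> q by move=> h; have := f_equal fst h; rewrite /=; lra.
  have [sh1 [am1 tr1]] := @straight_h _ p q erefl npq.
  have blk : forall s, shortest_rpath p q s -> at_most_one_corner p s ->
      trace p s `&` om^° !=set0.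
    move=> s sh _; exists z; split => //.
    rewrite (pt_eta z); apply: (trace_straight_h sh erefl).
    by rewrite /btw /=; left; apply/andP; split; lra.
  have [ab] := sk p q np nq blk _ sh1 am1.
  rewrite inE => /eqP -> [w [tw sw]].
  have [_ wy] := tr1 w tw.
  by have [_] := seg_coord sw; rewrite wy.
have Hx : forall z, om^° z -> btw u.1 z.1 v.1.
  move=> z Iz; have [_ /andP [zx1 zx2]] := region_coord (interior_subset Iz).
  pose p := (z.1, - M - 1); pose q := (z.1, M + 1).
  have np : ~ om^° p.
    move=> /interior_subset /region_coord [_ /andP [h _]]; move: h; rewrite /=; lra.
  have nq : ~ om^° q.
    move=> /interior_subset /region_coord [_ /andP [_ h]]; move: h; rewrite /=; lra.
  have npq : p <> q by move=> h; have := f_equal snd h; rewrite /=; lra.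
  have [sh1 [am1 tr1]] := @straight_v _ p q erefl npq.
  have blk : forall s, shortest_rpath p q s -> at_most_one_corner p s ->
      trace p s `&` om^° !=set0.
    move=> s sh _; exists z; split => //.
    rewrite (pt_eta z); apply: (trace_straight_v sh erefl).
    by rewrite /btw /=; left; apply/andP; split; lra.
  have [ab] := sk p q np nq blk _ sh1 am1.
  rewrite inE => /eqP -> [w [tw sw]].
  have [wx _] := tr1 w tw.
  by have [+ _] := seg_coord sw; rewrite wx.
have Hw : forall w, om w -> btw u.1 w.1 v.1 /\ btw u.2 w.2 v.2.
  move=> w rw; split; apply: btw_closed => e e0;
    have [z [Iz [h1 h2]]] := region_closure Hvs rw e0.
  - by exists z.1 => //; apply: Hx.
  - by exists z.2 => //; apply: Hy.
have omu : om u by apply: segom; apply: seg_l.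
have omv : om v by apply: segom; apply: seg_r.
set a := Num.min u.1 v.1; set b := Num.max u.1 v.1.
set c := Num.min u.2 v.2; set d := Num.max u.2 v.2.
have bb : is_bbox om a b c d.
  split.
  - move=> w /Hw [h1 h2]; rewrite /rect /a /b /c /d.
    move: h1 h2; rewrite /btw => h1 h2.
    split; apply/andP; split; rewrite ?ge_min ?le_max; apply/orP; lra.
  - move=> a' b' c' d' H w; rewrite /rect => [[/andP [w1 w2] /andP [w3 w4]]].
    have := H u omu; have := H v omv; rewrite /rect.
    move=> [/andP [v1 v2] /andP [v3 v4]] [/andP [u1 u2] /andP [u3 u4]].
    move: w1 w2 w3 w4; rewrite /a /b /c /d !ge_min !le_max => w1 w2 w3 w4.
    split; apply/andP; split.
    + by case/orP: w1 => h; lra.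
    + by case/orP: w2 => h; lra.
    + by case/orP: w3 => h; lra.
    + by case/orP: w4 => h; lra.
exists a, b, c, d; split => //.
have [h1|h1] := leP u.1 v.1; have [h2|h2] := leP u.2 v.2.
- left; have ea : a = u.1 by rewrite /a min_l.
  have eb : b = v.1 by rewrite /b max_r.
  have ec : c = u.2 by rewrite /c min_l.
  have ed : d = v.2 by rewrite /d max_r.
  by rewrite ea eb ec ed -!pt_eta.
- right; have ea : a = u.1 by rewrite /a min_l.
  have eb : b = v.1 by rewrite /b max_r.
  have ec : c = v.2 by rewrite /c min_r // ltW.
  have ed : d = u.2 by rewrite /d max_l // ltW.
  by rewrite ea eb ec ed -!pt_eta.
- right; have ea : a = v.1 by rewrite /a min_r // ltW.
  have eb : b = u.1 by rewrite /b max_l // ltW.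
  have ec : c = u.2 by rewrite /c min_l.
  have ed : d = v.2 by rewrite /d max_r.
  by rewrite ea eb ec ed -!pt_eta seg_sym.
- left; have ea : a = v.1 by rewrite /a min_r // ltW.
  have eb : b = u.1 by rewrite /b max_l // ltW.
  have ec : c = v.2 by rewrite /c min_r // ltW.
  have ed : d = u.2 by rewrite /d max_l // ltW.
  by rewrite ea eb ec ed -!pt_eta seg_sym.
Qed.

Lemma interior_nonempty : exists z, om^° z.
Proof.
have r0 : om (vtx vs 0).
  left; exists 0%N; first exact: (n_gt0 Hvs).
  exact: seg_l.
have [z [Iz _]] := region_closure Hvs r0 ltr01.
by exists z.
Qed.

Lemma backward : rect_convex om -> has_diagonal om ->
  forall S, min_skeleton om S -> size S = 1%N.
Proof.
move=> Hc [a [b [c [d [bb dg]]]]] S [skS minS].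
have [z Iz] := interior_nonempty.
have Hbox : om `<=` rect a b c d by case: bb.
have [/andP [za zb] /andP [zc zd]] := int_box Hbox Iz.
have hab : a < b by lra.
have hcd : c < d by lra.
have sk1 : exists D, skeleton om [:: D].
  case: dg => [[_ [_ HD]]|[_ [_ HD]]].
  - exists ((a, c), (b, d)).
    by apply: (@skel_D _ om Hc a b c d c d) => //; left.
  - exists ((a, d), (b, c)).
    by apply: (@skel_D _ om Hc a b c d d c) => //; right.
have [D skD] := sk1.
have le1 := minS _ skD.
case: S skS le1 minS => [|x [|y S']] skS le1 _ //.
by exfalso; apply: (empty_not_skel Hbox (ex_intro _ z Iz)).
Qed.
End F.

Theorem lemma5 (R : realType) (vs : seq (pt R)) :
  rect_obstacle vs -> rect_convex (region vs) ->
  forall S : seq (pt R * pt R), min_skeleton (region vs) S ->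
  (size S = 1%N <-> has_diagonal (region vs)).
Proof.
move=> Hvs Hc S mS; split.
- case: S mS => [|[u v] [|y S']] // [skS _] _.
  exact: (forward Hvs skS).
- move=> hd; exact: (backward Hvs Hc hd mS).
Qed.
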